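(* For any sequence of groups $(G_n)_{n\in\mathbb N}$: (1) for every permutation $f:\mathbb N\to\mathbb N$, $\mathcal A(G_n)\cong\mathcal A(G_{f(n)})$; (2) for every $k\in\mathbb N$, $\mathcal A(G_n)\cong\mathcal A((G_n)_{n\ge k})$; (3) $\mathcal A(G_n)\cong\mathcal A(G_{2n-1}*G_{2n})$, the archipelago group of the sequence $(G_{2n-1}*G_{2n})_{n\in\mathbb N}$.
   Context: For a sequence of groups $(G_n)_{n\in\mathbb N}$, an infinite word is a map $w:L\to\bigsqcup_n (G_n\setminus\{1\})$ from a countable linearly ordered set $L$ such that $w^{-1}(G_n)$ is finite for every $n$. Two infinite words are equivalent if for every $m$ their restrictions to the letters from $G_1,\dots,G_m$ represent the same element of $G_1*\cdots*G_m$. The topologist's product $\circledast_n G_n$ is the group of equivalence classes, with multiplication induced by concatenation and inversion by reversing the order and inverting each letter. The free product $*_n G_n$ is the subgroup of classes of finite words. The archipelago group is $\mathcal A(G_n):=\circledast_n G_n/\langle\langle *_n G_n\rangle\rangle$ (quotient by normal closure); the same construction applies to any countable sequence of groups. *)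

(* Defs.v *)
From Stdlib Require Import List Sorting.Sorted Arith Lia Classical ProofIrrelevance.
Import ListNotations.

Record GrpData : Type := {
  car :> Type;
  geq : car -> car -> Prop;
  gmul : car -> car -> car;
  gone : car;
  ginv : car -> car }.

Record is_group (G : GrpData) : Prop := {
  geq_refl : forall x, geq G x x;
  geq_sym : forall x y, geq G x y -> geq G y x;
  geq_trans : forall x y z, geq G x y -> geq G y z -> geq G x z;
  gmul_compat : forall x x' y y', geq G x x' -> geq G y y' ->
                  geq G (gmul G x y) (gmul G x' y');
  ginv_compat : forall x x', geq G x x' -> geq G (ginv G x) (ginv G x');
  gmul_assoc : forall x y z,
                 geq G (gmul G (gmul G x y) z) (gmul G x (gmul G y z));
  gmul_1l : forall x, geq G (gmul G (gone G) x) x;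
  gmul_1r : forall x, geq G (gmul G x (gone G)) x;
  gmul_Vl : forall x, geq G (gmul G (ginv G x) x) (gone G);
  gmul_Vr : forall x, geq G (gmul G x (ginv G x)) (gone G) }.

Section FreeProduct.
Variables (I : Type) (F : I -> GrpData).

Definition fletter : Type := {i : I & car (F i)}.

Inductive fp_step : list fletter -> list fletter -> Prop :=
| fps_eq i (x y : car (F i)) : geq (F i) x y ->
    fp_step [existT _ i x] [existT _ i y]
| fps_mul i (x y : car (F i)) :
    fp_step [existT _ i x; existT _ i y] [existT _ i (gmul (F i) x y)]
| fps_one i : fp_step [existT _ i (gone (F i))] [].

Inductive fpeq : list fletter -> list fletter -> Prop :=
| fpeq_step a u v b : fp_step u v -> fpeq (a ++ u ++ b) (a ++ v ++ b)
| fpeq_refl u : fpeq u u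
| fpeq_sym u v : fpeq u v -> fpeq v u
| fpeq_trans u v w : fpeq u v -> fpeq v w -> fpeq u w.

Definition finv_letter (l : fletter) : fletter :=
  existT _ (projT1 l) (ginv (F (projT1 l)) (projT2 l)).

Definition FreeProd : GrpData := {|
  car := list fletter;
  geq := fpeq;
  gmul := @app fletter;
  gone := [];
  ginv := fun w => rev (map finv_letter w) |}.
End FreeProduct.

Definition fam2 (A B : GrpData) : bool -> GrpData :=
  fun b => if b then A else B.

Section Topologist.
Variable G : nat -> GrpData.

(* An infinite word: a countable (strict, total) linear order L and a map
   from L to the disjoint union of the G n \ {1}, with finite fibres over
   each G n. *)
Record IWord : Type := {
  iL : Type;
  ilt : iL -> iL -> Prop;
  ilt_irrefl : forall x, ~ ilt x x;
  ilt_trans : forall x y z, ilt x y -> ilt y z -> ilt x z;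
  ilt_total : forall x y, x = y \/ ilt x y \/ ilt y x;
  iL_countable : exists c : iL -> nat, forall x y, c x = c y -> x = y;
  iidx : iL -> nat;
  iletter : forall x, car (G (iidx x));
  iletter_nontriv : forall x, ~ geq (G (iidx x)) (iletter x) (gone (G (iidx x)));
  ifinite : forall n, exists s : list iL, forall x, iidx x = n -> In x s }.

Definition Gfam (m : nat) : {n : nat | n < m} -> GrpData :=
  fun i => G (proj1_sig i).

Definition rletter (w : IWord) (m : nat) (p : {x : iL w | iidx w x < m})
  : fletter {n : nat | n < m} (Gfam m) :=
  existT (fun i => car (Gfam m i))
    (exist (fun n => n < m) (iidx w (proj1_sig p)) (proj2_sig p))
    (iletter w (proj1_sig p)).

Definition restr_word (w : IWord) (m : nat) (u : list (fletter {n : nat | n < m} (Gfam m))) : Prop :=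
  exists s : list {x : iL w | iidx w x < m},
    StronglySorted (fun p q => ilt w (proj1_sig p) (proj1_sig q)) s /\
    (forall x, iidx w x < m -> In x (map (@proj1_sig _ _) s)) /\
    u = map (@rletter w m) s.

Definition tpeq (w v : IWord) : Prop :=
  forall m u1 u2, restr_word w m u1 -> restr_word v m u2 -> fpeq _ _ u1 u2.

Section Mul.
Variables w1 w2 : IWord.
Definition slt (x y : iL w1 + iL w2) : Prop :=
  match x, y with
  | inl a, inl b => ilt w1 a b
  | inr a, inr b => ilt w2 a b
  | inl _, inr _ => True
  | inr _, inl _ => False
  end.
Definition sidx (x : iL w1 + iL w2) : nat :=
  match x with inl a => iidx w1 a | inr b => iidx w2 b end.
Definition sletter (x : iL w1 + iL w2) : car (G (sidx x)) :=
  match x as x0 return car (G (sidx x0)) with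
  | inl a => iletter w1 a | inr b => iletter w2 b end.
Lemma slt_irrefl x : ~ slt x x.
Proof. destruct x; simpl; apply ilt_irrefl. Qed.
Lemma slt_trans x y z : slt x y -> slt y z -> slt x z.
Proof.
  destruct x, y, z; simpl; try tauto; eauto using ilt_trans.
Qed.
Lemma slt_total x y : x = y \/ slt x y \/ slt y x.
Proof.
  destruct x as [a|a], y as [b|b]; simpl; auto.
  - destruct (ilt_total w1 a b) as [->|[H|H]]; auto.
  - destruct (ilt_total w2 a b) as [->|[H|H]]; auto.
Qed.
Lemma s_countable : exists c : iL w1 + iL w2 -> nat, forall x y, c x = c y -> x = y.
Proof.
  destruct (iL_countable w1) as [c1 H1], (iL_countable w2) as [c2 H2].
  exists (fun x => match x with inl a => 2 * c1 a | inr b => S (2 * c2 b) end).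
  intros [a|a] [b|b] E; try lia.
  - f_equal; apply H1; lia.
  - f_equal; apply H2; lia.
Qed.
Lemma s_nontriv x : ~ geq (G (sidx x)) (sletter x) (gone (G (sidx x))).
Proof. destruct x; apply iletter_nontriv. Qed.
Lemma s_finite n : exists s : list (iL w1 + iL w2), forall x, sidx x = n -> In x s.
Proof.
  destruct (ifinite w1 n) as [s1 H1], (ifinite w2 n) as [s2 H2].
  exists (map inl s1 ++ map inr s2); intros [a|a] E; apply in_or_app;
  [left|right]; apply in_map; auto.
Qed.
Definition tmul : IWord := {|
  iL := iL w1 + iL w2; ilt := slt; ilt_irrefl := slt_irrefl;
  ilt_trans := slt_trans; ilt_total := slt_total; iL_countable := s_countable;
  iidx := sidx; iletter := sletter; iletter_nontriv := s_nontriv;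
  ifinite := s_finite |}.
End Mul.

(* inversion: reverse the order and invert every letter.  (The letters whose
   inverse is trivial are discarded; when every G n is a group there are none,
   so this is literally the reversed inverted word.) *)
Section Inv.
Variable w : IWord.
Definition vL : Type :=
  {x : iL w | ~ geq (G (iidx w x)) (ginv _ (iletter w x)) (gone (G (iidx w x)))}.
Definition vlt (x y : vL) : Prop := ilt w (proj1_sig y) (proj1_sig x).
Definition vidx (x : vL) : nat := iidx w (proj1_sig x).
Definition vletter (x : vL) : car (G (vidx x)) := ginv _ (iletter w (proj1_sig x)).
Lemma vlt_irrefl x : ~ vlt x x.
Proof. apply ilt_irrefl. Qed.
Lemma vlt_trans x y z : vlt x y -> vlt y z -> vlt x z.
Proof. unfold vlt; eauto using ilt_trans. Qed.
Lemma vL_eq (x y : vL) : proj1_sig x = proj1_sig y -> x = y.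
Proof.
  destruct x as [x px], y as [y py]; simpl; intros ->.
  f_equal; apply proof_irrelevance.
Qed.
Lemma vlt_total x y : x = y \/ vlt x y \/ vlt y x.
Proof.
  unfold vlt; destruct (ilt_total w (proj1_sig x) (proj1_sig y)) as [E|[H|H]];
  auto using vL_eq.
Qed.
Lemma v_countable : exists c : vL -> nat, forall x y, c x = c y -> x = y.
Proof.
  destruct (iL_countable w) as [c H].
  exists (fun x => c (proj1_sig x)); intros x y E; apply vL_eq, H, E.
Qed.
Lemma v_nontriv x : ~ geq (G (vidx x)) (vletter x) (gone (G (vidx x))).
Proof. exact (proj2_sig x). Qed.
Lemma v_finite n : exists s : list vL, forall x, vidx x = n -> In x s.
Proof.
  destruct (ifinite w n) as [s H].
  assert (K : exists s' : list vL, forall x : vL, In (proj1_sig x) s -> In x s').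
  { clear H; induction s as [|a s IH].
    - exists []; intros x [].
    - destruct IH as [s' Hs'].
      destruct (classic (~ geq (G (iidx w a)) (ginv _ (iletter w a))
                           (gone (G (iidx w a))))) as [P|P].
      + exists (exist _ a P :: s'); intros x [E|E].
        * left; apply vL_eq; auto.
        * right; auto.
      + exists s'; intros x [E|E]; auto.
        exfalso; subst a; exact (P (proj2_sig x)). }
  destruct K as [s' Hs']; exists s'; intros x E; apply Hs', H, E.
Qed.
Definition tinv : IWord := {|
  iL := vL; ilt := vlt; ilt_irrefl := vlt_irrefl; ilt_trans := vlt_trans;
  ilt_total := vlt_total; iL_countable := v_countable; iidx := vidx;
  iletter := vletter; iletter_nontriv := v_nontriv; ifinite := v_finite |}.
End Inv.

Definition tone : IWord.
Proof.
  refine {| iL := Empty_set; ilt := fun _ _ => False;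
            iidx := fun x : Empty_set => match x with end;
            iletter := fun x : Empty_set => match x with end |}.
  - intros [].
  - intros [].
  - intros [].
  - exists (fun x : Empty_set => match x with end); intros [].
  - intros [].
  - intros n; exists []; intros [].
Defined.

(* classes of finite words: the free product *_n G_n inside the
   topologist's product *)
Definition finite_word (w : IWord) : Prop :=
  exists s : list (iL w), forall x, In x s.

Definition tconj (g s : IWord) : IWord := tmul (tmul g s) (tinv g).

Definition in_nclosure (x : IWord) : Prop :=
  exists l : list (IWord * IWord),
    (forall p, In p l -> finite_word (snd p)) /\
    tpeq x (fold_right tmul tone (map (fun p => tconj (fst p) (snd p)) l)).

(* equality in the archipelago group A(G_n) *)
Definition aeq (x y : IWord) : Prop := in_nclosure (tmul x (tinv y)).

End Topologist.

Arguments tmul {G} w1 w2.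
Arguments tinv {G} w.
Arguments tone {G}.
Arguments aeq {G} x y.
Arguments tpeq {G} w v.

(* group isomorphism A(G_n) ~= A(H_n), with elements represented by infinite
   words: a map on representatives that is well defined, multiplicative,
   injective and surjective on classes. *)
Definition arch_isomorphic (G H : nat -> GrpData) : Prop :=
  exists phi : IWord G -> IWord H,
    (forall x y, aeq x y -> aeq (phi x) (phi y)) /\
    (forall x y, aeq (phi (tmul x y)) (tmul (phi x) (phi y))) /\
    (forall x y, aeq (phi x) (phi y) -> aeq x y) /\
    (forall z, exists x, aeq (phi x) z).

(* Main.v *)
Require Import Defs.
From Stdlib Require Import List Sorting.Sorted Arith Lia Classical ProofIrrelevance ClassicalEpsilon.
Import ListNotations.

Arguments iL {G} i.
Arguments ilt {G} i _ _.
Arguments iidx {G} i _.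
Arguments iletter {G} i _.
Arguments fpeq {I F} _ _.
Arguments finv_letter {I F} l.

Section FP.
Context {I : Type} {F : I -> GrpData}.

Lemma fpeq_ctx a b u v : @fpeq I F u v -> fpeq (a ++ u ++ b) (a ++ v ++ b).
Proof.
  induction 1.
  - replace (a ++ (a0 ++ u ++ b0) ++ b) with ((a ++ a0) ++ u ++ (b0 ++ b))
      by (now rewrite !app_assoc).
    replace (a ++ (a0 ++ v ++ b0) ++ b) with ((a ++ a0) ++ v ++ (b0 ++ b))
      by (now rewrite !app_assoc).
    now apply fpeq_step.
  - apply fpeq_refl.
  - now apply fpeq_sym.
  - eapply fpeq_trans; eauto.
Qed.

Lemma fpeq_app u u' v v' : @fpeq I F u u' -> fpeq v v' -> fpeq (u ++ v) (u' ++ v').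
Proof.
  intros H1 H2. apply fpeq_trans with (u' ++ v).
  - pose proof (fpeq_ctx [] v u u' H1) as K; simpl in K. exact K.
  - pose proof (fpeq_ctx u' [] v v' H2) as K; rewrite !app_nil_r in K. exact K.
Qed.

Lemma fpeq_cons a u v : @fpeq I F u v -> fpeq (a :: u) (a :: v).
Proof. intros H. apply (fpeq_app [a] [a] u v); [apply fpeq_refl|exact H]. Qed.

Lemma fpeq_st u v : fp_step I F u v -> @fpeq I F u v.
Proof. intros H. pose proof (fpeq_step I F [] u v [] H) as K. simpl in K. now rewrite !app_nil_r in K. Qed.

Lemma fpeq_flat_map_ext {A} (f g : A -> list (fletter I F)) l :
  (forall a, In a l -> fpeq (f a) (g a)) -> fpeq (flat_map f l) (flat_map g l).
Proof.
  induction l; intros H; simpl. apply fpeq_refl.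
  apply fpeq_app; auto with datatypes.
Qed.
End FP.

Lemma fpeq_hom {I J} {F : I -> GrpData} {F' : J -> GrpData}
  (e : fletter I F -> list (fletter J F'))
  (h1 : forall i x y, geq (F i) x y -> fpeq (e (existT _ i x)) (e (existT _ i y)))
  (h2 : forall i x y, fpeq (e (existT _ i (gmul (F i) x y))) (e (existT _ i x) ++ e (existT _ i y)))
  (h3 : forall i, fpeq (e (existT _ i (gone (F i)))) [])
  u v : fpeq u v -> fpeq (flat_map e u) (flat_map e v).
Proof.
  induction 1.
  - rewrite !flat_map_app. apply fpeq_app; [apply fpeq_refl|]. apply fpeq_app; [|apply fpeq_refl].
    destruct H; simpl; rewrite ?app_nil_r; auto.
    apply fpeq_sym; auto.
  - apply fpeq_refl.
  - now apply fpeq_sym.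
  - eapply fpeq_trans; eauto.
Qed.

Section Grp.
Context {I : Type} {F : I -> GrpData} (HF : forall i, is_group (F i)).

Definition winv (l : list (fletter I F)) := rev (map finv_letter l).

Lemma winv_app l1 l2 : winv (l1 ++ l2) = winv l2 ++ winv l1.
Proof. unfold winv. now rewrite map_app, rev_app_distr. Qed.

Lemma fpeq_Vl_letter (a : fletter I F) : fpeq [finv_letter a; a] [].
Proof.
  destruct a as [i x]; simpl.
  eapply fpeq_trans. apply fpeq_st, fps_mul.
  eapply fpeq_trans. apply fpeq_st, fps_eq, (gmul_Vl _ (HF i)).
  apply fpeq_st, fps_one.
Qed.

Lemma fpeq_Vr_letter (a : fletter I F) : fpeq [a; finv_letter a] [].
Proof.
  destruct a as [i x]; simpl.
  eapply fpeq_trans. apply fpeq_st, fps_mul.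
  eapply fpeq_trans. apply fpeq_st, fps_eq, (gmul_Vr _ (HF i)).
  apply fpeq_st, fps_one.
Qed.

Lemma fpeq_Vl l : fpeq (winv l ++ l) [].
Proof.
  induction l as [|a l IH]; simpl. apply fpeq_refl.
  unfold winv in *; simpl. rewrite <- app_assoc. simpl.
  eapply fpeq_trans. apply (fpeq_ctx (rev (map finv_letter l)) l [finv_letter a; a] []), fpeq_Vl_letter.
  simpl. exact IH.
Qed.

Lemma fpeq_Vr l : fpeq (l ++ winv l) [].
Proof.
  induction l as [|a l IH] using rev_ind; simpl. apply fpeq_refl.
  unfold winv in *; rewrite map_app, rev_app_distr. simpl.
  replace ((l ++ [a]) ++ finv_letter a :: rev (map finv_letter l)) with
    (l ++ [a; finv_letter a] ++ rev (map finv_letter l)) by (now rewrite <- app_assoc).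
  eapply fpeq_trans. apply fpeq_ctx, fpeq_Vr_letter.
  simpl. exact IH.
Qed.

Lemma winv_winv l : fpeq (winv (winv l)) l.
Proof.
  unfold winv. rewrite map_rev, rev_involutive, map_map.
  induction l; simpl. apply fpeq_refl.
  apply (fpeq_app [_] [_]); auto. destruct a as [i x]; simpl.
  apply fpeq_st, fps_eq.
  pose proof (HF i) as g.
  eapply (geq_trans _ g). apply (geq_sym _ g), (gmul_1r _ g).
  eapply (geq_trans _ g). apply (gmul_compat _ g). apply (geq_refl _ g). apply (geq_sym _ g), (gmul_Vl _ g x).
  eapply (geq_trans _ g). apply (geq_sym _ g), (gmul_assoc _ g).
  eapply (geq_trans _ g). apply (gmul_compat _ g). apply (gmul_Vl _ g). apply (geq_refl _ g).
  apply (gmul_1l _ g).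
Qed.
End Grp.

Definition cb (P : Prop) : bool := if excluded_middle_informative P then true else false.
Lemma cbP P : cb P = true <-> P.
Proof. unfold cb; destruct excluded_middle_informative; split; congruence || tauto. Qed.
Lemma cbF P : cb P = false <-> ~ P.
Proof. unfold cb; destruct excluded_middle_informative; split; congruence || tauto. Qed.
Lemma cbT' {P} : cb P = true -> P. Proof. apply cbP. Qed.
Lemma cbF' {P} : cb P = false -> ~ P. Proof. apply cbF. Qed.

Lemma flat_map_single {A B} (f : A -> B) l : flat_map (fun a => [f a]) l = map f l.
Proof. induction l; simpl; congruence. Qed.

Lemma SS_map {A B} (R : B -> B -> Prop) (f : A -> B) l :
  StronglySorted R (map f l) <-> StronglySorted (fun a b => R (f a) (f b)) l.
Proof.
  induction l; simpl; split; intros H; try constructor;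
   apply StronglySorted_inv in H as [H1 H2].
  - apply IHl, H1.
  - rewrite Forall_map in H2. exact H2.
  - apply IHl, H1.
  - rewrite Forall_map. exact H2.
Qed.

Lemma SS_filter {A} (R : A -> A -> Prop) (f : A -> bool) l :
  StronglySorted R l -> StronglySorted R (filter f l).
Proof.
  induction l; simpl; intros H. constructor.
  apply StronglySorted_inv in H as [H1 H2].
  destruct (f a); auto. constructor; auto.
  rewrite Forall_forall in *. intros x Hx. apply filter_In in Hx. apply H2, Hx.
Qed.

Section Sort.
Context {A : Type} (R : A -> A -> Prop) (irr : forall x, ~ R x x)
  (tr : forall x y z, R x y -> R y z -> R x z) (tot : forall x y, x = y \/ R x y \/ R y x).

Fixpoint ins x l := match l with [] => [x] | a :: t =>
  if cb (x = a) then l else if cb (R x a) then x :: l else a :: ins x t end.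

Lemma ins_in x l y : In y (ins x l) <-> y = x \/ In y l.
Proof.
  induction l as [|a t IH]; simpl.
  { split; [intros [H|[]]; auto | intros [H|[]]; auto]. }
  destruct (cb (x = a)) eqn:E1.
  { apply cbT' in E1. subst. simpl. split; [auto| intros [->|H]; auto]. }
  destruct (cb (R x a)); simpl. { split; intros H; destruct H; auto. }
  rewrite IH. split; intros H; [destruct H as [|[|]]| destruct H as [|[|]]]; auto.
Qed.

Lemma ins_ss x l : StronglySorted R l -> StronglySorted R (ins x l).
Proof.
  induction l as [|a t IH]; simpl; intros H. repeat constructor.
  apply StronglySorted_inv in H as [H1 H2].
  destruct (cb (x = a)) eqn:E1. constructor; auto.
  apply cbF' in E1.
  destruct (cb (R x a)) eqn:E2. apply cbT' in E2.
  constructor. constructor; auto. constructor; auto.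
  rewrite Forall_forall in *. intros y Hy; eauto.
  apply cbF' in E2. assert (R a x) by (destruct (tot x a) as [|[|]]; tauto).
  constructor; auto. rewrite Forall_forall in *. intros y Hy. apply ins_in in Hy as [->|Hy]; auto.
Qed.

Lemma ss_exists l : exists s, StronglySorted R s /\ forall y, In y s <-> In y l.
Proof.
  induction l as [|a l [s [H1 H2]]]. exists []. split. constructor. tauto.
  exists (ins a s). split. apply ins_ss, H1. intros y. rewrite ins_in, H2. simpl. intuition.
Qed.

Lemma ss_unique s1 : forall s2, StronglySorted R s1 -> StronglySorted R s2 ->
  (forall y, In y s1 <-> In y s2) -> s1 = s2.
Proof.
  induction s1 as [|a t1 IH]; intros [|b t2] H1 H2 E.
  - auto.
  - exfalso. apply (E b). now left.
  - exfalso. apply (E a). now left.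
  - apply StronglySorted_inv in H1 as [H1a H1b]. apply StronglySorted_inv in H2 as [H2a H2b].
    rewrite Forall_forall in *.
    assert (a = b).
    { destruct (proj1 (E a) (or_introl eq_refl)) as [|Ha]; auto.
      destruct (proj2 (E b) (or_introl eq_refl)) as [|Hb]; auto.
      exfalso. apply (irr a). eapply tr; eauto. }
    subst b. f_equal. apply IH; auto. intros y. split; intros Hy.
    + destruct (proj1 (E y) (or_intror Hy)); auto. subst. exfalso; eapply irr; eauto.
    + destruct (proj2 (E y) (or_intror Hy)); auto. subst. exfalso; eapply irr; eauto.
Qed.
End Sort.

Section Words.
Context {G : nat -> GrpData}.

Definition ltr (w : IWord G) (x : iL w) : fletter nat G := existT _ (iidx w x) (iletter w x).

Definition RWs (w : IWord G) (p : nat -> bool) (s : list (iL w)) :=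
  StronglySorted (ilt w) s /\ forall x, In x s <-> p (iidx w x) = true.

Definition bounded (p : nat -> bool) := exists M, forall n, p n = true -> n < M.

Lemma cover (w : IWord G) M : exists l, forall x, iidx w x < M -> In x l.
Proof.
  induction M as [|M [l IH]]. exists []. intros; lia.
  destruct (ifinite G w M) as [l' H']. exists (l' ++ l). intros x Hx.
  apply in_or_app. destruct (Nat.eq_dec (iidx w x) M); [left; auto|right; apply IH; lia].
Qed.

Lemma RWs_exists w p : bounded p -> exists s, RWs w p s.
Proof.
  intros [M HM]. destruct (cover w M) as [l Hl].
  destruct (ss_exists (ilt w) (ilt_trans G w) (ilt_total G w)
     (filter (fun x => p (iidx w x)) l)) as [s [H1 H2]].
  exists s. split; auto. intros x. rewrite H2, filter_In. intuition.
Qed.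

Lemma RWs_unique w p s1 s2 : RWs w p s1 -> RWs w p s2 -> s1 = s2.
Proof.
  intros [H1 H2] [H3 H4]. apply (ss_unique (ilt w) (ilt_irrefl G w) (ilt_trans G w)); auto.
  intros y. rewrite H2, H4. tauto.
Qed.

Lemma RWs_filter w p q s : RWs w p s -> (forall n, q n = true -> p n = true) ->
  RWs w q (filter (fun x => q (iidx w x)) s).
Proof.
  intros [H1 H2] Hq. split. apply SS_filter, H1.
  intros x. rewrite filter_In, H2. intuition.
Qed.

Definition liftN m (a : fletter {n : nat | n < m} (Gfam G m)) : fletter nat G :=
  existT (fun n => car (G n)) (proj1_sig (projT1 a)) (projT2 a).

Definition lowN m (a : fletter nat G) : list (fletter {n : nat | n < m} (Gfam G m)) :=
  match lt_dec (projT1 a) m with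
  | left h => [existT (fun i => car (Gfam G m i)) (exist (fun n => n < m) (projT1 a) h) (projT2 a)]
  | right _ => [] end.

Lemma lowN_liftN m u : flat_map (lowN m) (map (liftN m) u) = u.
Proof.
  induction u as [|[[n h0] x] u IH]; simpl. auto.
  rewrite IH. unfold lowN; simpl. destruct (lt_dec n m) as [h|h]; [|lia].
  assert (h = h0) by apply proof_irrelevance. subst. reflexivity.
Qed.

Lemma fpeq_liftN m u v : fpeq u v <-> fpeq (map (liftN m) u) (map (liftN m) v).
Proof.
  split; intros H.
  - rewrite <- !flat_map_single. apply fpeq_hom; auto; intros.
    + simpl. now apply fpeq_st, fps_eq.
    + simpl. apply fpeq_sym, fpeq_st, fps_mul.
    + simpl. apply fpeq_st, fps_one.
  - rewrite <- (lowN_liftN m u), <- (lowN_liftN m v). apply fpeq_hom; auto; intros; unfold lowN; simpl;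
      destruct (lt_dec i m); simpl; try apply fpeq_refl.
    + now apply fpeq_st, fps_eq.
    + apply fpeq_sym, fpeq_st, fps_mul.
    + apply fpeq_st, fps_one.
Qed.

Lemma lift_sub {A} (Q : A -> Prop) (l : list A) : (forall x, In x l -> Q x) ->
  exists l' : list {x | Q x}, map (@proj1_sig _ _) l' = l.
Proof.
  induction l as [|a l IH]; intros H. exists []; auto.
  destruct IH as [l' E]. intros; apply H; simpl; auto.
  exists (exist _ a (H a (or_introl eq_refl)) :: l'). simpl. congruence.
Qed.

Definition ltb_ m := fun n => Nat.ltb n m.

Lemma tpeq_iff w v : tpeq w v <-> forall m s1 s2, RWs w (ltb_ m) s1 -> RWs v (ltb_ m) s2 ->
   fpeq (map (ltr w) s1) (map (ltr v) s2).
Proof.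
  split.
  - intros H m s1 s2 [A1 B1] [A2 B2].
    destruct (lift_sub (fun x => iidx w x < m) s1) as [s1' E1].
    { intros x Hx. apply B1 in Hx; unfold ltb_ in Hx; apply Nat.ltb_lt in Hx. exact Hx. }
    destruct (lift_sub (fun x => iidx v x < m) s2) as [s2' E2].
    { intros x Hx. apply B2 in Hx; unfold ltb_ in Hx; apply Nat.ltb_lt in Hx. exact Hx. }
    assert (K := H m (map (rletter G w m) s1') (map (rletter G v m) s2')).
    apply (fpeq_liftN m) in K.
    + rewrite !map_map in K. subst s1 s2. rewrite !map_map. exact K.
    + exists s1'. split; [|split; auto]. apply SS_map. rewrite E1. exact A1.
      intros x Hx. rewrite E1. apply B1, Nat.ltb_lt, Hx.
    + exists s2'. split; [|split; auto]. apply SS_map. rewrite E2. exact A2.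
      intros x Hx. rewrite E2. apply B2, Nat.ltb_lt, Hx.
  - intros H m u1 u2 [s1 [A1 [B1 ->]]] [s2 [A2 [B2 ->]]].
    apply (fpeq_liftN m). rewrite !map_map.
    assert (K := H m (map (@proj1_sig _ _) s1) (map (@proj1_sig _ _) s2)).
    rewrite !map_map in K. apply K.
    + split. apply SS_map, A1. intros x. unfold ltb_. rewrite Nat.ltb_lt. split.
      * intros Hx. apply in_map_iff in Hx as [y [<- _]]. apply (proj2_sig y).
      * apply B1.
    + split. apply SS_map, A2. intros x. unfold ltb_. rewrite Nat.ltb_lt. split.
      * intros Hx. apply in_map_iff in Hx as [y [<- _]]. apply (proj2_sig y).
      * apply B2.
Qed.
End Words.

Lemma SS_app {A} (R : A -> A -> Prop) l1 l2 : StronglySorted R l1 -> StronglySorted R l2 ->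
  (forall a b, In a l1 -> In b l2 -> R a b) -> StronglySorted R (l1 ++ l2).
Proof.
  induction l1 as [|a l1 IH]; simpl; intros H1 H2 H; auto.
  apply StronglySorted_inv in H1 as [H1a H1b]. constructor. apply IH; auto.
  rewrite Forall_forall in *. intros x Hx. apply in_app_or in Hx as [Hx|Hx]; auto.
Qed.

Lemma SS_rev {A} (R : A -> A -> Prop) l : StronglySorted R l -> StronglySorted (fun a b => R b a) (rev l).
Proof.
  induction l as [|a l IH]; simpl; intros H. constructor.
  apply StronglySorted_inv in H as [H1 H2]. apply SS_app; auto. repeat constructor.
  intros x y Hx [<-|[]]. apply in_rev in Hx. rewrite Forall_forall in H2. auto.
Qed.

Definition filterL {I} {F : I -> GrpData} (p : I -> bool) (l : list (fletter I F)) :=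
  flat_map (fun a => if p (projT1 a) then [a] else []) l.

Lemma filterL_app {I} {F : I -> GrpData} p l1 l2 : @filterL I F p (l1 ++ l2) = filterL p l1 ++ filterL p l2.
Proof. apply flat_map_app. Qed.

Lemma filterL_hom {I} {F : I -> GrpData} p u v : fpeq u v -> fpeq (@filterL I F p u) (filterL p v).
Proof.
  apply fpeq_hom; intros; simpl; destruct (p i); try apply fpeq_refl.
  - now apply fpeq_st, fps_eq.
  - apply fpeq_sym, fpeq_st, fps_mul.
  - apply fpeq_st, fps_one.
Qed.

Lemma winv_compat {I} {F : I -> GrpData} (HF : forall i, is_group (F i)) u v :
  fpeq u v -> fpeq (@winv I F u) (winv v).
Proof.
  intros H. apply fpeq_trans with (winv u ++ (v ++ winv v)).
  - rewrite <- (app_nil_r (winv u)) at 1. apply fpeq_app. apply fpeq_refl. apply fpeq_sym, fpeq_Vr, HF.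
  - rewrite app_assoc. rewrite <- (app_nil_l (winv v)) at 2. apply fpeq_app; [|apply fpeq_refl].
    eapply fpeq_trans. apply fpeq_app. apply fpeq_refl. apply fpeq_sym, H. apply fpeq_Vl, HF.
Qed.

Section Rf.
Context {G : nat -> GrpData}.

Definition Rfun (w : IWord G) (p : nat -> bool) : list (fletter nat G) :=
  match excluded_middle_informative (exists s, RWs w p s) with
  | left h => map (ltr w) (proj1_sig (constructive_indefinite_description _ h))
  | right _ => [] end.

Lemma Rfun_spec w p s : RWs w p s -> Rfun w p = map (ltr w) s.
Proof.
  intros H. unfold Rfun. destruct excluded_middle_informative as [h|h].
  - destruct constructive_indefinite_description as [s' H']. simpl. f_equal. eapply RWs_unique; eauto.
  - exfalso; eauto.
Qed.

Lemma bounded_ltb m : bounded (ltb_ m).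
Proof. exists m. intros n H. apply Nat.ltb_lt, H. Qed.

Lemma tpeq_Rfun (w v : IWord G) : tpeq w v <-> forall m, fpeq (Rfun w (ltb_ m)) (Rfun v (ltb_ m)).
Proof.
  rewrite tpeq_iff. split.
  - intros H m. destruct (RWs_exists w _ (bounded_ltb m)) as [s1 H1].
    destruct (RWs_exists v _ (bounded_ltb m)) as [s2 H2].
    rewrite (Rfun_spec _ _ _ H1), (Rfun_spec _ _ _ H2). eapply H; eauto.
  - intros H m s1 s2 H1 H2. specialize (H m).
    rewrite (Rfun_spec _ _ _ H1), (Rfun_spec _ _ _ H2) in H. auto.
Qed.

Lemma Rfun_filter w p q : bounded p -> (forall n, q n = true -> p n = true) ->
  Rfun w q = filterL q (Rfun w p).
Proof.
  intros Hp Hq. destruct (RWs_exists w p Hp) as [s H].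
  rewrite (Rfun_spec _ _ _ H), (Rfun_spec _ _ _ (RWs_filter _ _ _ _ H Hq)).
  unfold filterL. clear. induction s as [|a s IH]; simpl. auto.
  destruct (q (iidx w a)); simpl; rewrite IH; reflexivity.
Qed.

Lemma tpeq_bounded w v p : tpeq w v -> bounded p -> fpeq (Rfun w p) (Rfun v p).
Proof.
  intros H [M HM]. rewrite tpeq_Rfun in H. specialize (H M).
  rewrite (Rfun_filter w (ltb_ M) p), (Rfun_filter v (ltb_ M) p).
  apply filterL_hom, H. apply bounded_ltb. intros n Hn; apply Nat.ltb_lt; auto.
  apply bounded_ltb. intros n Hn; apply Nat.ltb_lt; auto.
Qed.

Lemma Rfun_tmul w1 w2 p : bounded p -> Rfun (tmul w1 w2) p = Rfun w1 p ++ Rfun w2 p.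
Proof.
  intros Hp. destruct (RWs_exists w1 p Hp) as [s1 [A1 B1]].
  destruct (RWs_exists w2 p Hp) as [s2 [A2 B2]].
  rewrite (Rfun_spec w1 p s1), (Rfun_spec w2 p s2) by (split; auto).
  rewrite (Rfun_spec (tmul w1 w2) p (map inl s1 ++ map inr s2)).
  - rewrite map_app, !map_map. reflexivity.
  - split.
    + apply SS_app. apply SS_map, A1. apply SS_map, A2.
      intros a b Ha Hb. apply in_map_iff in Ha as [? [<- _]]. apply in_map_iff in Hb as [? [<- _]]. exact I.
    + intros [x|x]; simpl; rewrite in_app_iff, !in_map_iff.
      * rewrite <- B1. split. intros [[y [E Hy]]|[y [E _]]]; [injection E; intros ->; auto|discriminate].
        intros Hx. left. eauto.
      * rewrite <- B2. split. intros [[y [E _]]|[y [E Hy]]]; [discriminate|injection E; intros ->; auto].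
        intros Hx. right. eauto.
Qed.

Lemma Rfun_tone p : Rfun tone p = [].
Proof.
  rewrite (Rfun_spec tone p []). auto. split. constructor. intros [].
Qed.

Context (HG : forall n, is_group (G n)).

Lemma inv_nontriv n (x : car (G n)) : ~ geq (G n) x (gone (G n)) -> ~ geq (G n) (ginv (G n) x) (gone (G n)).
Proof.
  intros H1 H2. apply H1. pose proof (HG n) as g.
  eapply (geq_trans _ g). apply (geq_sym _ g), (gmul_1r _ g).
  eapply (geq_trans _ g). apply (gmul_compat _ g). apply (geq_refl _ g). apply (geq_sym _ g), H2.
  apply (gmul_Vr _ g).
Qed.

Lemma Rfun_tinv w p : bounded p -> Rfun (tinv w) p = winv (Rfun w p).
Proof.
  intros Hp. destruct (RWs_exists w p Hp) as [s [A1 B1]].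
  rewrite (Rfun_spec w p s) by (split; auto).
  destruct (lift_sub (fun x => ~ geq (G (iidx w x)) (ginv _ (iletter w x)) (gone (G (iidx w x)))) s) as [s' E].
  { intros x _. apply inv_nontriv, iletter_nontriv. }
  rewrite (Rfun_spec (tinv w) p (rev s')).
  - unfold winv. rewrite <- E, map_rev, !map_map. reflexivity.
  - split.
    + apply (SS_rev (fun a b : vL G w => ilt w (proj1_sig a) (proj1_sig b))).
      rewrite <- E in A1. apply (proj1 (SS_map (ilt w) (@proj1_sig _ _) s')) in A1. exact A1.
    + intros x. rewrite <- in_rev. simpl. unfold vidx. rewrite <- B1, <- E, in_map_iff. split.
      * intros Hx. eauto.
      * intros [y [Ey Hy]]. replace x with y; auto. apply vL_eq; auto.
Qed.

Lemma tpeq_refl (w : IWord G) : tpeq w w.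
Proof. apply tpeq_Rfun. intros; apply fpeq_refl. Qed.
Lemma tpeq_sym (w v : IWord G) : tpeq w v -> tpeq v w.
Proof. rewrite !tpeq_Rfun. intros H m; apply fpeq_sym; auto. Qed.
Lemma tpeq_trans (w v u : IWord G) : tpeq w v -> tpeq v u -> tpeq w u.
Proof. rewrite !tpeq_Rfun. intros H1 H2 m; eapply fpeq_trans; eauto. Qed.

Ltac rfs := repeat first [rewrite Rfun_tmul by apply bounded_ltb | rewrite Rfun_tinv by apply bounded_ltb
   | rewrite Rfun_tone].

Lemma tmul_compat (a a' b b' : IWord G) : tpeq a a' -> tpeq b b' -> tpeq (tmul a b) (tmul a' b').
Proof. rewrite !tpeq_Rfun. intros H1 H2 m. rfs. apply fpeq_app; auto. Qed.
Lemma tinv_compat (a a' : IWord G) : tpeq a a' -> tpeq (tinv a) (tinv a').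
Proof. rewrite !tpeq_Rfun. intros H1 m. rfs. apply winv_compat; auto. Qed.
Lemma tmul_assoc (a b c : IWord G) : tpeq (tmul (tmul a b) c) (tmul a (tmul b c)).
Proof. apply tpeq_Rfun. intros m. rfs. rewrite app_assoc. apply fpeq_refl. Qed.
Lemma tmul_1l (a : IWord G) : tpeq (tmul tone a) a.
Proof. apply tpeq_Rfun. intros m. rfs. apply fpeq_refl. Qed.
Lemma tmul_1r (a : IWord G) : tpeq (tmul a tone) a.
Proof. apply tpeq_Rfun. intros m. rfs. rewrite app_nil_r. apply fpeq_refl. Qed.
Lemma tmul_Vl (a : IWord G) : tpeq (tmul (tinv a) a) tone.
Proof. apply tpeq_Rfun. intros m. rfs. apply fpeq_Vl, HG. Qed.
Lemma tmul_Vr (a : IWord G) : tpeq (tmul a (tinv a)) tone.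
Proof. apply tpeq_Rfun. intros m. rfs. apply fpeq_Vr, HG. Qed.
Lemma tinv_tmul (a b : IWord G) : tpeq (tinv (tmul a b)) (tmul (tinv b) (tinv a)).
Proof. apply tpeq_Rfun. intros m. rfs. rewrite winv_app. apply fpeq_refl. Qed.
Lemma tinv_tinv (a : IWord G) : tpeq (tinv (tinv a)) a.
Proof. apply tpeq_Rfun. intros m. rfs. apply winv_winv, HG. Qed.
Lemma tinv_tone : tpeq (tinv (@tone G)) tone.
Proof. apply tpeq_Rfun. intros m. rfs. apply fpeq_refl. Qed.
End Rf.

Section Ncl.
Context {G : nat -> GrpData} (HG : forall n, is_group (G n)).

Ltac rfs := repeat first [rewrite Rfun_tmul by apply bounded_ltb | rewrite Rfun_tinv by (auto; apply bounded_ltb)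
   | rewrite Rfun_tone].

Lemma finite_tinv (s : IWord G) : finite_word G s -> finite_word G (tinv s).
Proof.
  intros [l Hl].
  destruct (lift_sub (fun x => ~ geq (G (iidx s x)) (ginv _ (iletter s x)) (gone (G (iidx s x)))) l) as [l' E].
  { intros x _. apply inv_nontriv, iletter_nontriv; auto. }
  exists l'. intros y. assert (K := Hl (proj1_sig y)). rewrite <- E in K.
  apply in_map_iff in K as [z [Ez Hz]]. replace y with z; auto. apply vL_eq; auto.
Qed.

Definition NCL := in_nclosure G.
Definition cfold (l : list (IWord G * IWord G)) :=
  fold_right tmul tone (map (fun p => tconj G (fst p) (snd p)) l).

Lemma ncl_tpeq x y : NCL x -> tpeq x y -> NCL y.
Proof.
  intros [l [H1 H2]] H. exists l. split; auto. eapply tpeq_trans; eauto. apply tpeq_sym; auto.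
Qed.

Lemma ncl_one : NCL tone.
Proof. exists []. split. intros _ []. apply tpeq_refl; auto. Qed.

Lemma cfold_app l1 l2 : tpeq (cfold (l1 ++ l2)) (tmul (cfold l1) (cfold l2)).
Proof.
  induction l1 as [|a l1 IH]; simpl.
  - apply tpeq_sym; auto. apply tmul_1l; auto.
  - unfold cfold in *; simpl. eapply tpeq_trans; [|apply tpeq_sym, tmul_assoc; auto].
    apply tmul_compat; auto. apply tpeq_refl; auto.
Qed.

Lemma ncl_mul x y : NCL x -> NCL y -> NCL (tmul x y).
Proof.
  intros [l1 [A1 B1]] [l2 [A2 B2]]. exists (l1 ++ l2). split.
  - intros p Hp. apply in_app_or in Hp as [|]; auto.
  - fold (cfold (l1 ++ l2)). eapply tpeq_trans; [|apply tpeq_sym, cfold_app; auto].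
    apply tmul_compat; auto.
Qed.

Lemma ncl_conj g s : finite_word G s -> NCL (tconj G g s).
Proof.
  intros H. exists [(g, s)]. split. intros p [<-|[]]; auto.
  simpl. apply tpeq_sym, tmul_1r; auto.
Qed.

Lemma tinv_tconj g s : tpeq (tinv (tconj G g s)) (tconj G g (tinv s)).
Proof.
  apply tpeq_Rfun. intros m. unfold tconj. rfs.
  rewrite !winv_app. rewrite app_assoc. apply fpeq_app; [|apply fpeq_refl].
  apply fpeq_app; [apply winv_winv; auto|apply fpeq_refl].
Qed.

Lemma ncl_inv x : NCL x -> NCL (tinv x).
Proof.
  intros [l [A1 B1]]. apply ncl_tpeq with (tinv (cfold l)).
  2:{ apply tinv_compat, tpeq_sym; auto. }
  clear B1. induction l as [|[g s] l IH]; simpl.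
  - eapply ncl_tpeq. apply ncl_one. apply tpeq_sym, tinv_tone; auto.
  - eapply ncl_tpeq; [|apply tpeq_sym, tinv_tmul; auto].
    apply ncl_mul. apply IH. intros; apply A1; simpl; auto.
    eapply ncl_tpeq; [|apply tpeq_sym, tinv_tconj].
    apply ncl_conj, finite_tinv, (A1 (g, s)); simpl; auto.
Qed.

Lemma aeq_of_tpeq (x y : IWord G) : tpeq x y -> aeq x y.
Proof.
  intros H. unfold aeq. eapply ncl_tpeq. apply ncl_one.
  rewrite tpeq_Rfun in *. intros m. rfs. apply fpeq_sym.
  eapply fpeq_trans. apply fpeq_app. apply H. apply fpeq_refl. apply fpeq_Vr; auto.
Qed.

Lemma aeq_refl (x : IWord G) : aeq x x.
Proof. apply aeq_of_tpeq, tpeq_refl; auto. Qed.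

Lemma aeq_sym (x y : IWord G) : aeq x y -> aeq y x.
Proof.
  unfold aeq. intros H. apply ncl_inv in H. eapply ncl_tpeq; eauto.
  eapply tpeq_trans. apply tinv_tmul; auto. apply tmul_compat; auto. apply tinv_tinv; auto. apply tpeq_refl; auto.
Qed.

Lemma aeq_trans (x y z : IWord G) : aeq x y -> aeq y z -> aeq x z.
Proof.
  unfold aeq. intros H1 H2. eapply ncl_tpeq. apply (ncl_mul _ _ H1 H2).
  apply tpeq_Rfun. intros m. rfs. rewrite <- !app_assoc. apply fpeq_app. apply fpeq_refl.
  rewrite app_assoc. rewrite <- (app_nil_l (winv (Rfun z _))) at 2. apply fpeq_app. apply fpeq_Vl; auto. apply fpeq_refl.
Qed.

Lemma aeq_tpeq_l (x x' y : IWord G) : tpeq x x' -> aeq x y -> aeq x' y.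
Proof. intros H1 H2. eapply aeq_trans. apply aeq_of_tpeq, tpeq_sym, H1; auto. auto. Qed.
End Ncl.

Section Iso.
Context {G H : nat -> GrpData} (HG : forall n, is_group (G n)) (HH : forall n, is_group (H n)).

Record WM (phi : IWord G -> IWord H) : Prop := {
  wm_resp : forall x y, tpeq x y -> tpeq (phi x) (phi y);
  wm_mul : forall x y, tpeq (phi (tmul x y)) (tmul (phi x) (phi y));
  wm_one : tpeq (phi tone) tone;
  wm_fin : forall x, finite_word G x -> finite_word H (phi x) }.

Context (phi : IWord G -> IWord H) (Hphi : WM phi).

Lemma wm_inv x : tpeq (phi (tinv x)) (tinv (phi x)).
Proof.
  destruct Hphi as [R M O F].
  apply tpeq_trans with (tmul (phi (tinv x)) (tmul (phi x) (tinv (phi x)))); auto.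
  { apply tpeq_sym; auto. eapply tpeq_trans; [|apply tmul_1r]; auto. apply tmul_compat; auto. apply tpeq_refl; auto.
    apply tmul_Vr; auto. }
  eapply tpeq_trans; [apply tpeq_sym, tmul_assoc|]; auto.
  eapply tpeq_trans; [|apply tmul_1l]; auto. apply tmul_compat; auto. 2: apply tpeq_refl; auto.
  eapply tpeq_trans; [apply tpeq_sym, M|]; auto.
  eapply tpeq_trans; [|apply O]; auto. apply R. apply tmul_Vl; auto.
Qed.

Lemma wm_conj g s : tpeq (phi (tconj G g s)) (tconj H (phi g) (phi s)).
Proof.
  destruct Hphi as [R M O F]. unfold tconj.
  eapply tpeq_trans; [apply M|]; auto. apply tmul_compat; auto. apply wm_inv.
Qed.

Lemma wm_ncl x : NCL x -> NCL (phi x).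
Proof.
  intros [l [A B]]. destruct Hphi as [R M O F].
  exists (map (fun p => (phi (fst p), phi (snd p))) l). split.
  - intros p Hp. apply in_map_iff in Hp as [q [<- Hq]]. simpl. apply F, A, Hq.
  - eapply tpeq_trans. apply R, B. clear A B. induction l as [|[g s] l IH]; simpl. apply O.
    eapply tpeq_trans. apply M. apply tmul_compat; auto. apply wm_conj.
Qed.

Lemma wm_aeq x y : aeq x y -> aeq (phi x) (phi y).
Proof.
  unfold aeq. intros K. apply wm_ncl in K. eapply ncl_tpeq; eauto.
  destruct Hphi as [R M O F].
  eapply tpeq_trans. apply M. apply tmul_compat; auto. apply tpeq_refl; auto. apply wm_inv.
Qed.
End Iso.

Lemma iso_of {G H : nat -> GrpData} (HG : forall n, is_group (G n)) (HH : forall n, is_group (H n))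
  (phi : IWord G -> IWord H) (psi : IWord H -> IWord G) :
  WM phi -> WM psi -> (forall x, aeq (psi (phi x)) x) -> (forall z, aeq (phi (psi z)) z) ->
  arch_isomorphic G H.
Proof.
  intros W1 W2 E1 E2. exists phi. split; [|split; [|split]].
  - intros x y. apply wm_aeq; auto.
  - intros x y. apply aeq_of_tpeq; auto. apply (wm_mul _ W1).
  - intros x y K. apply (wm_aeq HH HG psi W2) in K.
    apply (aeq_trans HG) with (psi (phi x)). apply (aeq_sym HG), E1.
    apply (aeq_trans HG) with (psi (phi y)); auto.
  - intros z. exists (psi z). auto.
Qed.

From Stdlib Require Cantor.

Lemma SS_flat_map {A B} (R : B -> B -> Prop) (Q : A -> A -> Prop) (f : A -> list B) l :
  StronglySorted Q l -> (forall a, In a l -> StronglySorted R (f a)) ->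
  (forall a a' b b', Q a a' -> In b (f a) -> In b' (f a') -> R b b') ->
  StronglySorted R (flat_map f l).
Proof.
  induction l as [|a l IH]; simpl; intros H1 H2 H3. constructor.
  apply StronglySorted_inv in H1 as [H1a H1b]. rewrite Forall_forall in H1b.
  apply SS_app; auto. intros b b' Hb Hb'. apply in_flat_map in Hb' as [a' [Ha' Hb']]. eauto.
Qed.

Lemma SS_seq s n : StronglySorted Peano.lt (seq s n).
Proof.
  revert s; induction n; intros s; simpl; constructor; auto.
  rewrite Forall_forall. intros x Hx. apply in_seq in Hx. lia.
Qed.

Lemma flat_map_seq_nth {A B} (f : A -> list B) (l : list A) d :
  flat_map (fun j => f (nth j l d)) (seq 0 (length l)) = flat_map f l.
Proof.
  induction l as [|a l IH]; simpl. auto. f_equal. rewrite <- seq_shift, flat_map_concat_map, map_map.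
  rewrite <- IH, flat_map_concat_map. reflexivity.
Qed.

Lemma map_flat_map {A B C} (f : B -> C) (g : A -> list B) l :
  map f (flat_map g l) = flat_map (fun a => map f (g a)) l.
Proof. induction l; simpl; auto. rewrite map_app; congruence. Qed.

Lemma flat_map_flat_map {A B C} (f : B -> list C) (g : A -> list B) l :
  flat_map f (flat_map g l) = flat_map (fun a => flat_map f (g a)) l.
Proof. induction l; simpl; auto. rewrite flat_map_app; congruence. Qed.

Lemma flat_map_map {A B C} (f : B -> list C) (g : A -> B) l :
  flat_map f (map g l) = flat_map (fun a => f (g a)) l.
Proof. induction l; simpl; auto; congruence. Qed.

Lemma flat_map_ext_in {A B} (f g : A -> list B) l : (forall a, In a l -> f a = g a) -> flat_map f l = flat_map g l.
Proof. induction l; simpl; intros K; auto. rewrite K, IHl; auto. Qed.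

Lemma sigT_eta' {A} {P : A -> Type} (s : sigT P) : existT P (projT1 s) (projT2 s) = s.
Proof. destruct s; auto. Qed.

Lemma map_filter_filterL {A I} {F : I -> GrpData} (f : A -> fletter I F) (q : I -> bool) l :
  map f (filter (fun a => q (projT1 (f a))) l) = filterL q (map f l).
Proof. induction l as [|a l IH]; simpl; auto. destruct (q (projT1 (f a))); simpl; rewrite IH; auto. Qed.

Section Wc.
Context {G H : nat -> GrpData}.

Definition hd : fletter nat H := existT (fun n => car (H n)) 0 (gone (H 0)).
Definition ntriv (a : fletter nat H) : Prop := ~ geq (H (projT1 a)) (projT2 a) (gone (H (projT1 a))).
Definition ntf (l : list (fletter nat H)) := flat_map (fun b => if cb (ntriv b) then [b] else []) l.

Lemma ntf_fpeq l : fpeq (ntf l) l.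
Proof.
  induction l as [|b l IH]; simpl. apply fpeq_refl.
  destruct (cb (ntriv b)) eqn:E; simpl. apply fpeq_cons, IH.
  apply cbF' in E. unfold ntriv in E. apply NNPP in E.
  rewrite <- (app_nil_l (ntf l)). apply (fpeq_app [] [b]); auto.
  destruct b as [i x]. simpl in E. apply fpeq_sym. eapply fpeq_trans.
  apply fpeq_st, (fps_eq _ _ i _ _ E). apply fpeq_st, fps_one.
Qed.

Section Wd.
Context (w : IWord G) (E : iL w -> list (fletter nat H)).
Context (src : nat -> list nat) (Hsrc : forall x b, In b (E x) -> In (iidx w x) (src (projT1 b))).

Definition WL := {x : iL w & {j : nat | j < length (E x) /\ ntriv (nth j (E x) hd)}}.
Definition wlt (a b : WL) := ilt w (projT1 a) (projT1 b) \/
   (projT1 a = projT1 b /\ proj1_sig (projT2 a) < proj1_sig (projT2 b)).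
Definition widx (a : WL) := projT1 (nth (proj1_sig (projT2 a)) (E (projT1 a)) hd).
Definition wletter (a : WL) : car (H (widx a)) := projT2 (nth (proj1_sig (projT2 a)) (E (projT1 a)) hd).

Lemma WL_eq (a b : WL) : projT1 a = projT1 b -> proj1_sig (projT2 a) = proj1_sig (projT2 b) -> a = b.
Proof.
  destruct a as [x [j h]], b as [y [k h']]; simpl; intros -> ->. f_equal. f_equal. apply proof_irrelevance.
Qed.

Lemma wlt_irrefl a : ~ wlt a a.
Proof. intros [K|[_ K]]. eapply ilt_irrefl; eauto. lia. Qed.
Lemma wlt_trans a b c : wlt a b -> wlt b c -> wlt a c.
Proof.
  unfold wlt. intros [K1|[K1 K1']] [K2|[K2 K2']].
  - left. eapply ilt_trans; eauto.
  - left. rewrite <- K2. auto.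
  - left. rewrite K1. auto.
  - right. split. congruence. lia.
Qed.
Lemma wlt_total a b : a = b \/ wlt a b \/ wlt b a.
Proof.
  unfold wlt. destruct (ilt_total G w (projT1 a) (projT1 b)) as [K|[K|K]]; auto.
  destruct (lt_eq_lt_dec (proj1_sig (projT2 a)) (proj1_sig (projT2 b))) as [[K'|K']|K']; auto.
  left. apply WL_eq; auto.
Qed.
Lemma w_countable : exists c : WL -> nat, forall a b, c a = c b -> a = b.
Proof.
  destruct (iL_countable G w) as [c Hc].
  exists (fun a => Cantor.to_nat (c (projT1 a), proj1_sig (projT2 a))). intros a b K.
  apply (f_equal Cantor.of_nat) in K. rewrite !Cantor.cancel_of_to in K. injection K; intros.
  apply WL_eq; auto.
Qed.
Lemma w_nontriv a : ~ geq (H (widx a)) (wletter a) (gone (H (widx a))).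
Proof. exact (proj2 (proj2_sig (projT2 a))). Qed.

Definition posx (x : iL w) : list WL :=
  flat_map (fun j => match lt_dec j (length (E x)) with
     | left h1 => match excluded_middle_informative (ntriv (nth j (E x) hd)) with
         | left h2 => [existT _ x (exist _ j (conj h1 h2))] | right _ => [] end
     | right _ => [] end) (seq 0 (length (E x))).

Lemma in_posx (a : WL) : In a (posx (projT1 a)).
Proof.
  destruct a as [x [j [h1 h2]]]. simpl. unfold posx. apply in_flat_map. exists j. split.
  apply in_seq. lia. destruct (lt_dec j (length (E x))); [|lia].
  destruct excluded_middle_informative; [|tauto]. left. apply WL_eq; auto.
Qed.

Lemma posx_fst x a : In a (posx x) -> projT1 a = x.
Proof.
  unfold posx. intros K. apply in_flat_map in K as [j [_ K]].
  destruct lt_dec; [|destruct K]. destruct excluded_middle_informative; [|destruct K].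
  destruct K as [<-|[]]. auto.
Qed.

Lemma posx_ss x : StronglySorted wlt (posx x).
Proof.
  unfold posx. apply SS_flat_map with (Q := Peano.lt). apply SS_seq.
  - intros j _. destruct lt_dec; [destruct excluded_middle_informative|]; repeat constructor.
  - intros j j' b b' Hj K1 K2.
    destruct (lt_dec j (length (E x))); [|destruct K1]. destruct excluded_middle_informative; [|destruct K1].
    destruct (lt_dec j' (length (E x))); [|destruct K2]. destruct excluded_middle_informative; [|destruct K2].
    destruct K1 as [<-|[]]. destruct K2 as [<-|[]]. right. simpl. auto.
Qed.

Definition Wd : IWord H.
Proof.
  refine {| iL := WL; ilt := wlt; ilt_irrefl := wlt_irrefl; ilt_trans := wlt_trans;
    ilt_total := wlt_total; iL_countable := w_countable; iidx := widx; iletter := wletter;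
    iletter_nontriv := w_nontriv |}.
  intros n.
  assert (K : exists l : list (iL w), forall x, In (iidx w x) (src n) -> In x l).
  { clear Hsrc. induction (src n) as [|m sl [l IH]]. exists []. intros x [].
    destruct (ifinite G w m) as [l' Hl']. exists (l' ++ l). intros x [K|K]; apply in_or_app; auto. }
  destruct K as [l Hl]. exists (flat_map posx l). intros a Ha. apply in_flat_map. exists (projT1 a).
  split; [|apply in_posx]. apply Hl. rewrite <- Ha. apply Hsrc. unfold widx.
  destruct a as [x [j [h1 h2]]]. simpl. apply nth_In, h1.
Defined.

Lemma Wd_finite : finite_word G w -> finite_word H Wd.
Proof.
  intros [l Hl]. exists (flat_map posx l). intros a. apply in_flat_map. exists (projT1 a). split; auto. apply in_posx.
Qed.

Lemma map_ltr_posx x : map (ltr Wd) (posx x) = ntf (E x).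
Proof.
  unfold posx, ntf. rewrite map_flat_map. rewrite <- (flat_map_seq_nth _ (E x) hd).
  apply flat_map_ext_in. intros j Hj. apply in_seq in Hj.
  destruct (lt_dec j (length (E x))) as [h1|]; [|lia]. unfold cb.
  destruct excluded_middle_informative as [h2|h2]; simpl; auto.
  f_equal. apply sigT_eta'.
Qed.

Lemma RWs_Wd p p' s : RWs w p' s -> (forall n m, p n = true -> In m (src n) -> p' m = true) ->
  RWs Wd p (flat_map (fun x => filter (fun a => p (widx a)) (posx x)) s).
Proof.
  intros [A1 B1] Hp. split.
  - apply SS_flat_map with (Q := ilt w); auto.
    + intros x _. apply SS_filter, posx_ss.
    + intros x x' b b' Hx K1 K2. apply filter_In in K1 as [K1 _]. apply filter_In in K2 as [K2 _].
      apply posx_fst in K1. apply posx_fst in K2. left. simpl. rewrite K1, K2. auto.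
  - intros a. rewrite in_flat_map. split.
    + intros [x [_ K]]. apply filter_In in K. apply K.
    + intros K. exists (projT1 a). split. apply B1. eapply Hp. apply K.
      apply Hsrc. destruct a as [x [j [h1 h2]]]. simpl. apply nth_In, h1.
      apply filter_In. split; auto. apply in_posx.
Qed.

Lemma Rfun_Wd p p' s : RWs w p' s -> (forall n m, p n = true -> In m (src n) -> p' m = true) ->
  Rfun Wd p = filterL p (ntf (flat_map E s)).
Proof.
  intros K1 K2. rewrite (Rfun_spec _ _ _ (RWs_Wd p p' s K1 K2)).
  unfold filterL, ntf. rewrite !flat_map_flat_map, map_flat_map.
  apply flat_map_ext_in. intros x _. transitivity (filterL p (ntf (E x))).
  2:{ unfold filterL, ntf. rewrite flat_map_flat_map. reflexivity. }
  rewrite <- map_ltr_posx. exact (map_filter_filterL (ltr Wd) p (posx x)).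
Qed.

End Wd.

Definition pre (src : nat -> list nat) (p : nat -> bool) (M : nat) : nat -> bool :=
  fun m => existsb (fun n => andb (p n) (existsb (Nat.eqb m) (src n))) (seq 0 M).

Lemma pre_cond src p M : (forall n, p n = true -> n < M) ->
  forall n m, p n = true -> In m (src n) -> pre src p M m = true.
Proof.
  intros HM n m Hn Hm. apply existsb_exists. exists n. split. apply in_seq. specialize (HM n Hn). lia.
  rewrite Hn. simpl. apply existsb_exists. exists m. split; auto. apply Nat.eqb_refl.
Qed.

Lemma pre_bounded src p M : bounded (pre src p M).
Proof.
  exists (S (list_max (flat_map src (seq 0 M)))). intros m K.
  apply existsb_exists in K as [n [Hn K]]. apply andb_prop in K as [_ K].
  apply existsb_exists in K as [m' [Hm' K]]. apply Nat.eqb_eq in K. subst m'.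
  assert (m <= list_max (flat_map src (seq 0 M))); [|lia].
  pose proof (proj1 (list_max_le (flat_map src (seq 0 M)) _) (le_n _)) as L.
  rewrite Forall_forall in L. apply L, in_flat_map. eauto.
Qed.

Lemma cond_exists (src : nat -> list nat) p : bounded p ->
  exists p', bounded p' /\ forall n m, p n = true -> In m (src n) -> p' m = true.
Proof.
  intros [M HM]. exists (pre src p M). split. apply pre_bounded. apply pre_cond, HM.
Qed.

Section Wfs.
Context (e : fletter nat G -> list (fletter nat H)) (src : nat -> list nat)
  (He : forall a b, In b (e a) -> In (projT1 a) (src (projT1 b))).

Definition Wf (w : IWord G) : IWord H :=
  Wd w (fun x => e (ltr w x)) src (fun x b Hb => He (ltr w x) b Hb).

Lemma Rfun_Wf w p p' : bounded p' -> (forall n m, p n = true -> In m (src n) -> p' m = true) ->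
  Rfun (Wf w) p = filterL p (ntf (flat_map e (Rfun w p'))).
Proof.
  intros B C. destruct (RWs_exists w p' B) as [s K].
  unfold Wf. rewrite (Rfun_Wd _ _ _ _ p p' s K C). rewrite (Rfun_spec _ _ _ K), flat_map_map. auto.
Qed.

Lemma filterL_nil {I} {F : I -> GrpData} (p : I -> bool) (l : list (fletter I F)) :
  (forall b, In b l -> p (projT1 b) = false) -> filterL p l = [].
Proof.
  induction l as [|b l IH]; simpl; intros K; auto. rewrite K; auto.
Qed.

Lemma filter_drop p p' L : (forall n m, p n = true -> In m (src n) -> p' m = true) ->
  filterL p (flat_map e (filterL p' L)) = filterL p (flat_map e L).
Proof.
  intros C. induction L as [|a L IH]; simpl; auto.
  rewrite !flat_map_app, !filterL_app, <- IH. f_equal.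
  destruct (p' (projT1 a)) eqn:Ea; simpl. rewrite app_nil_r. auto.
  symmetry. apply filterL_nil. intros b Hb. destruct (p (projT1 b)) eqn:Eb; auto.
  rewrite (C _ _ Eb (He _ _ Hb)) in Ea. discriminate.
Qed.

Context (h1 : forall i x y, geq (G i) x y -> fpeq (e (existT _ i x)) (e (existT _ i y)))
  (h2 : forall i x y, fpeq (e (existT _ i (gmul (G i) x y))) (e (existT _ i x) ++ e (existT _ i y)))
  (h3 : forall i, fpeq (e (existT _ i (gone (G i)))) []).

Lemma Rfun_Wf_fpeq w p p' : bounded p' -> (forall n m, p n = true -> In m (src n) -> p' m = true) ->
  fpeq (Rfun (Wf w) p) (filterL p (flat_map e (Rfun w p'))).
Proof.
  intros B C. rewrite (Rfun_Wf w p p' B C). apply filterL_hom, ntf_fpeq.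
Qed.

Lemma Wf_WM : WM Wf.
Proof.
  split.
  - intros x y K. apply tpeq_Rfun. intros m.
    destruct (cond_exists src (ltb_ m) (bounded_ltb m)) as [p' [B C]].
    eapply fpeq_trans. apply (Rfun_Wf_fpeq x _ p' B C).
    eapply fpeq_trans. 2: apply fpeq_sym, (Rfun_Wf_fpeq y _ p' B C).
    apply filterL_hom, fpeq_hom; auto. apply tpeq_bounded; auto.
  - intros x y. apply tpeq_Rfun. intros m.
    destruct (cond_exists src (ltb_ m) (bounded_ltb m)) as [p' [B C]].
    rewrite Rfun_tmul by apply bounded_ltb.
    rewrite !(Rfun_Wf _ _ p' B C). rewrite Rfun_tmul by auto.
    rewrite flat_map_app. unfold ntf. rewrite flat_map_app, filterL_app. apply fpeq_refl.
  - apply tpeq_Rfun. intros m.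
    destruct (cond_exists src (ltb_ m) (bounded_ltb m)) as [p' [B C]].
    rewrite !(Rfun_Wf _ _ p' B C). rewrite !Rfun_tone. apply fpeq_refl.
  - intros x. apply Wd_finite.
Qed.

End Wfs.
End Wc.

Lemma bounded_or p q : bounded p -> bounded q -> bounded (fun n => orb (p n) (q n)).
Proof.
  intros [M1 H1] [M2 H2]. exists (M1 + M2). intros n K. apply Bool.orb_true_iff in K as [K|K].
  specialize (H1 n K); lia. specialize (H2 n K); lia.
Qed.

Section Comp.
Context {G H K : nat -> GrpData}.
Context (e1 : fletter nat G -> list (fletter nat H)) (src1 : nat -> list nat)
  (He1 : forall a b, In b (e1 a) -> In (projT1 a) (src1 (projT1 b))).
Context (e2 : fletter nat H -> list (fletter nat K)) (src2 : nat -> list nat)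
  (He2 : forall a b, In b (e2 a) -> In (projT1 a) (src2 (projT1 b))).
Context (e3 : fletter nat G -> list (fletter nat K)) (src3 : nat -> list nat)
  (He3 : forall a b, In b (e3 a) -> In (projT1 a) (src3 (projT1 b))).
Context (h1 : forall i x y, geq (H i) x y -> fpeq (e2 (existT _ i x)) (e2 (existT _ i y)))
  (h2 : forall i x y, fpeq (e2 (existT _ i (gmul (H i) x y))) (e2 (existT _ i x) ++ e2 (existT _ i y)))
  (h3 : forall i, fpeq (e2 (existT _ i (gone (H i)))) []).
Context (Hc : forall a, fpeq (flat_map e2 (e1 a)) (e3 a)).

Lemma Wf_comp x : tpeq (Wf e2 src2 He2 (Wf e1 src1 He1 x)) (Wf e3 src3 He3 x).
Proof.
  apply tpeq_Rfun. intros m.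
  destruct (cond_exists src2 (ltb_ m) (bounded_ltb m)) as [p' [B' C']].
  destruct (cond_exists src1 p' B') as [q1 [B1 C1]].
  destruct (cond_exists src3 (ltb_ m) (bounded_ltb m)) as [q3 [B3 C3]].
  set (p'' := fun n => orb (q1 n) (q3 n)).
  assert (B'' : bounded p'') by (apply bounded_or; auto).
  eapply fpeq_trans. apply (Rfun_Wf_fpeq e2 src2 He2 _ _ p' B' C').
  eapply fpeq_trans. 2: apply fpeq_sym, (Rfun_Wf_fpeq e3 src3 He3 _ _ p'' B'').
  2:{ intros n k Hn Hk. unfold p''. rewrite (C3 n k Hn Hk). apply Bool.orb_true_r. }
  rewrite (Rfun_Wf e1 src1 He1 _ p' p'' B'').
  2:{ intros n k Hn Hk. unfold p''. rewrite (C1 n k Hn Hk). auto. }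
  eapply fpeq_trans. apply filterL_hom, fpeq_hom; auto. apply filterL_hom, ntf_fpeq.
  rewrite (filter_drop e2 src2 He2 _ _ _ C'). apply filterL_hom.
  rewrite flat_map_flat_map. apply fpeq_flat_map_ext. auto.
Qed.
End Comp.

Section Filt.
Context {G : nat -> GrpData}.
Definition eq_ (q : nat -> bool) (a : fletter nat G) : list (fletter nat G) := if q (projT1 a) then [a] else [].
Lemma eq_src q a b : In b (eq_ q a) -> In (projT1 a) ((fun n => [n]) (projT1 b)).
Proof. unfold eq_. destruct (q (projT1 a)); [intros [<-|[]]; simpl; auto | intros []]. Qed.
Definition Wq q := Wf (eq_ q) (fun n => [n]) (eq_src q).

Lemma Rfun_Wq q (x : IWord G) p : bounded p -> fpeq (Rfun (Wq q x) p) (filterL q (Rfun x p)).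
Proof.
  intros B. eapply fpeq_trans. apply (Rfun_Wf_fpeq _ _ _ x p p B). intros n m Hn [<-|[]]; auto.
  rewrite (Rfun_filter x p p B (fun n K => K)).
  generalize (Rfun x p). intros L. induction L as [|a L IH]; simpl. apply fpeq_refl.
  unfold eq_ at 1. destruct (p (projT1 a)) eqn:Ep; simpl.
  - destruct (q (projT1 a)) eqn:Eq; simpl; rewrite ?Ep; simpl; auto. apply fpeq_cons, IH.
  - exact IH.
Qed.

Lemma Wq_true (x : IWord G) : tpeq (Wq (fun _ => true) x) x.
Proof.
  apply tpeq_Rfun. intros m. eapply fpeq_trans. apply Rfun_Wq, bounded_ltb.
  generalize (Rfun x (ltb_ m)). intros L. induction L; simpl. apply fpeq_refl. apply fpeq_cons; auto.
Qed.

End Filt.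

Lemma isg_FreeProd {I} (F : I -> GrpData) : (forall i, is_group (F i)) -> is_group (FreeProd I F).
Proof.
  intros HF. split; simpl.
  - apply fpeq_refl.
  - apply fpeq_sym.
  - apply fpeq_trans.
  - intros; apply fpeq_app; auto.
  - intros. apply (winv_compat HF); auto.
  - intros. rewrite app_assoc. apply fpeq_refl.
  - intros. apply fpeq_refl.
  - intros. rewrite app_nil_r. apply fpeq_refl.
  - intros. apply (fpeq_Vl HF).
  - intros. apply (fpeq_Vr HF).
Qed.

Lemma filterL_all {I} {F : I -> GrpData} (p : I -> bool) (l : list (fletter I F)) :
  (forall b, In b l -> p (projT1 b) = true) -> filterL p l = l.
Proof.
  induction l as [|b l IH]; simpl; intros K; auto. rewrite K; auto. simpl. f_equal. apply IH; auto.
Qed.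

Lemma filter_nil_if {A} (f : A -> bool) l : (forall y, In y l -> f y = false) -> filter f l = [].
Proof. induction l as [|a l IH]; simpl; intros K; auto. rewrite K; auto. Qed.

Lemma filter_split {A} (R : A -> A -> Prop) (irr : forall x, ~ R x x) (tr : forall x y z, R x y -> R y z -> R x z)
  (tot : forall x y, x = y \/ R x y \/ R y x)
  (Q : A -> bool) c l : StronglySorted R l ->
  filter Q l = filter (fun x => andb (Q x) (cb (R x c))) l ++ filter (fun x => andb (Q x) (cb (x = c))) l
     ++ filter (fun x => andb (Q x) (cb (R c x))) l.
Proof.
  induction l as [|a l IH]; simpl; intros H. auto.
  apply StronglySorted_inv in H as [H1 H2]. rewrite Forall_forall in H2.
  destruct (tot a c) as [->|[E|E]].
  - assert (K1 : cb (R c c) = false) by (apply cbF; apply irr).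
    assert (K2 : cb (c = c) = true) by (apply cbP; auto).
    rewrite K1, K2, !Bool.andb_false_r.
    rewrite (filter_nil_if (fun x => andb (Q x) (cb (R x c)))).
    rewrite (filter_nil_if (fun x => andb (Q x) (cb (x = c)))).
    rewrite (filter_ext_in (fun x => andb (Q x) (cb (R c x))) Q).
    rewrite Bool.andb_true_r. simpl. destruct (Q c); auto.
    + intros y Hy. assert (cb (R c y) = true) by (apply cbP; auto). rewrite H. apply Bool.andb_true_r.
    + intros y Hy. assert (cb (y = c) = false) by (apply cbF; intros ->; eapply irr; eauto). rewrite H. apply Bool.andb_false_r.
    + intros y Hy. assert (cb (R y c) = false) by (apply cbF; intros K; eapply irr, tr; eauto). rewrite H. apply Bool.andb_false_r.
  - assert (K1 : cb (R a c) = true) by (apply cbP; auto).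
    assert (K2 : cb (a = c) = false) by (apply cbF; intros ->; eapply irr; eauto).
    assert (K3 : cb (R c a) = false) by (apply cbF; intros K; eapply irr, tr; eauto).
    rewrite K1, K2, K3, !Bool.andb_false_r, Bool.andb_true_r. rewrite IH; auto. destruct (Q a); auto.
  - assert (K1 : cb (R a c) = false) by (apply cbF; intros K; eapply irr, tr; eauto).
    assert (K2 : cb (a = c) = false) by (apply cbF; intros ->; eapply irr; eauto).
    assert (K3 : cb (R c a) = true) by (apply cbP; auto).
    rewrite K1, K2, K3, !Bool.andb_false_r, Bool.andb_true_r.
    rewrite (filter_nil_if (fun x => andb (Q x) (cb (R x c)))).
    rewrite (filter_nil_if (fun x => andb (Q x) (cb (x = c)))).
    rewrite (filter_ext_in (fun x => andb (Q x) (cb (R c x))) Q). simpl. auto.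
    + intros y Hy. assert (cb (R c y) = true) by (apply cbP; eauto). rewrite H. apply Bool.andb_true_r.
    + intros y Hy. assert (cb (y = c) = false) by (apply cbF; intros ->; eapply irr, tr; eauto). rewrite H. apply Bool.andb_false_r.
    + intros y Hy. assert (cb (R y c) = false) by (apply cbF; intros K; eapply irr, tr; [|eapply tr]; eauto). rewrite H. apply Bool.andb_false_r.
Qed.

Section Keep.
Context {G : nat -> GrpData} (HG : forall n, is_group (G n)).
Context (u : IWord G).

Definition KE (Q : iL u -> bool) (x : iL u) : list (fletter nat G) := if Q x then [ltr u x] else [].
Lemma KE_src Q x b : In b (KE Q x) -> In (iidx u x) ((fun n => [n]) (projT1 b)).
Proof. unfold KE. destruct (Q x); [intros [<-|[]]; simpl; auto|intros []]. Qed.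
Definition Keep Q : IWord G := Wd u (KE Q) (fun n => [n]) (KE_src Q).

Lemma Rfun_Keep Q p s : RWs u p s -> fpeq (Rfun (Keep Q) p) (map (ltr u) (filter Q s)).
Proof.
  intros K. unfold Keep. rewrite (Rfun_Wd u (KE Q) _ _ p p s K).
  2:{ intros n m Hn [<-|[]]; auto. }
  assert (E : flat_map (KE Q) s = map (ltr u) (filter Q s)).
  { clear. induction s as [|a s IH]; simpl; auto. unfold KE at 1. destruct (Q a); simpl; congruence. }
  rewrite E. eapply fpeq_trans. apply filterL_hom, ntf_fpeq. rewrite filterL_all. apply fpeq_refl.
  intros b Hb. apply in_map_iff in Hb as [x [<- Hx]]. apply filter_In in Hx as [Hx _]. apply K, Hx.
Qed.

Lemma Keep_finite1 Q c : (forall x, Q x = true -> x = c) -> finite_word G (Keep Q).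
Proof.
  intros HQ. exists (posx u (KE Q) c). intros a. replace c with (projT1 a). apply in_posx.
  destruct a as [x [j [h1 h2]]]. simpl in *. unfold KE in h1. destruct (Q x) eqn:E. auto. simpl in h1. lia.
Qed.

Ltac rfs := repeat first [rewrite Rfun_tmul by apply bounded_ltb | rewrite Rfun_tinv by (auto; apply bounded_ltb)
   | rewrite Rfun_tone].

Lemma Keep_step Q c : aeq (Keep Q) (Keep (fun x => andb (Q x) (negb (cb (x = c))))).
Proof.
  set (A := Keep (fun x => andb (Q x) (cb (ilt u x c)))).
  set (C := Keep (fun x => andb (Q x) (cb (x = c)))).
  set (B := Keep (fun x => andb (Q x) (cb (ilt u c x)))).
  assert (T1 : tpeq (Keep Q) (tmul (tmul A C) B)).
  { apply tpeq_Rfun. intros m. destruct (RWs_exists u _ (bounded_ltb m)) as [s K]. rfs.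
    eapply fpeq_trans. apply (Rfun_Keep Q _ s K).
    eapply fpeq_trans. 2:{ apply fpeq_app. apply fpeq_app. apply fpeq_sym, (Rfun_Keep _ _ s K).
      apply fpeq_sym, (Rfun_Keep _ _ s K). apply fpeq_sym, (Rfun_Keep _ _ s K). }
    rewrite <- !map_app, <- app_assoc. rewrite <- (filter_split (ilt u) (ilt_irrefl G u) (ilt_trans G u) (ilt_total G u)).
    apply fpeq_refl. apply K. }
  assert (T2 : tpeq (Keep (fun x => andb (Q x) (negb (cb (x = c))))) (tmul A B)).
  { apply tpeq_Rfun. intros m. destruct (RWs_exists u _ (bounded_ltb m)) as [s K]. rfs.
    eapply fpeq_trans. apply (Rfun_Keep _ _ s K).
    eapply fpeq_trans. 2:{ apply fpeq_app. apply fpeq_sym, (Rfun_Keep _ _ s K). apply fpeq_sym, (Rfun_Keep _ _ s K). }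
    rewrite <- map_app. rewrite (filter_split (ilt u) (ilt_irrefl G u) (ilt_trans G u) (ilt_total G u) _ c) by apply K.
    rewrite (filter_nil_if (fun x => andb (andb (Q x) (negb (cb (x = c)))) (cb (x = c)))).
    2:{ intros y _. destruct (cb (y = c)); simpl; rewrite ?Bool.andb_false_r; auto. }
    rewrite (filter_ext_in (fun x => andb (andb (Q x) (negb (cb (x = c)))) (cb (ilt u x c))) (fun x => andb (Q x) (cb (ilt u x c)))).
    rewrite (filter_ext_in (fun x => andb (andb (Q x) (negb (cb (x = c)))) (cb (ilt u c x))) (fun x => andb (Q x) (cb (ilt u c x)))).
    apply fpeq_refl.
    - intros y _. destruct (cb (ilt u c y)) eqn:E; rewrite ?Bool.andb_false_r; auto.
      apply cbT' in E. assert (cb (y = c) = false) by (apply cbF; intros ->; eapply ilt_irrefl; eauto).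
      rewrite H, !Bool.andb_true_r. auto.
    - intros y _. destruct (cb (ilt u y c)) eqn:E; rewrite ?Bool.andb_false_r; auto.
      apply cbT' in E. assert (cb (y = c) = false) by (apply cbF; intros ->; eapply ilt_irrefl; eauto).
      rewrite H, !Bool.andb_true_r. auto. }
  unfold aeq. apply ncl_tpeq with (tconj G A C).
  - apply ncl_conj. apply (Keep_finite1 _ c). intros x Hx. apply Bool.andb_true_iff in Hx as [_ Hx]. apply cbT', Hx.
  - apply tpeq_Rfun. intros m. unfold tconj. rfs.
    apply tpeq_sym in T1; auto. apply tpeq_sym in T2; auto.
    apply (tpeq_bounded _ _ (ltb_ m)) in T1; [|apply bounded_ltb].
    apply (tpeq_bounded _ _ (ltb_ m)) in T2; [|apply bounded_ltb].
    rewrite !Rfun_tmul in T1 by apply bounded_ltb. rewrite !Rfun_tmul in T2 by apply bounded_ltb.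
    eapply fpeq_trans. 2: apply fpeq_app; [apply T1|apply (winv_compat HG), T2].
    rewrite winv_app. rewrite <- !app_assoc. apply fpeq_app. apply fpeq_refl. apply fpeq_app. apply fpeq_refl.
    rewrite app_assoc. rewrite <- (app_nil_l (winv (Rfun A _))) at 1. apply fpeq_app. apply fpeq_sym, fpeq_Vr; auto.
    apply fpeq_refl.
Qed.

Lemma Keep_ext Q Q' : (forall x, Q x = Q' x) -> tpeq (Keep Q) (Keep Q').
Proof.
  intros E. apply tpeq_Rfun. intros m. destruct (RWs_exists u _ (bounded_ltb m)) as [s K].
  eapply fpeq_trans. apply (Rfun_Keep _ _ s K). eapply fpeq_trans. 2: apply fpeq_sym, (Rfun_Keep _ _ s K).
  rewrite (filter_ext _ _ E). apply fpeq_refl.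
Qed.

Definition DropS (S : list (iL u)) := Keep (fun x => negb (cb (In x S))).

Lemma DropS_aeq S : aeq u (DropS S).
Proof.
  induction S as [|c S IH].
  - apply aeq_of_tpeq; auto. apply tpeq_Rfun. intros m. destruct (RWs_exists u _ (bounded_ltb m)) as [s K].
    eapply fpeq_trans. 2: apply fpeq_sym, (Rfun_Keep _ _ s K).
    rewrite (filter_ext_in _ (fun _ => true)), filter_true. rewrite (Rfun_spec _ _ _ K). apply fpeq_refl.
    intros y _. assert (cb (In y []) = false) by (apply cbF; intros []). rewrite H; auto.
  - apply (aeq_trans HG) with (DropS S). exact IH.
    apply (aeq_trans HG) with (Keep (fun x => andb (negb (cb (In x S))) (negb (cb (x = c))))).
    apply (Keep_step _ c).
    apply aeq_of_tpeq; auto. apply Keep_ext. intros x.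
    destruct (cb (x = c)) eqn:E1; destruct (cb (In x S)) eqn:E2; destruct (cb (In x (c :: S))) eqn:E3; simpl; auto.
    all: repeat match goal with H : cb _ = true |- _ => apply cbT' in H | H : cb _ = false |- _ => apply cbF' in H end;
      simpl in *; exfalso.
    + apply E3. left. auto.
    + apply E3. left. auto.
    + apply E3. right. auto.
    + destruct E3 as [->|K]; auto.
Qed.

Lemma drop_aeq (q : nat -> bool) : bounded (fun n => negb (q n)) -> aeq (Wq q u) u.
Proof.
  intros B. destruct (RWs_exists u _ B) as [sc Ksc].
  apply (aeq_sym HG). apply (aeq_trans HG) with (DropS sc). apply (DropS_aeq sc).
  apply aeq_of_tpeq; auto. apply tpeq_Rfun. intros m. destruct (RWs_exists u _ (bounded_ltb m)) as [s K].
  eapply fpeq_trans. apply (Rfun_Keep _ _ s K). eapply fpeq_trans. 2: apply fpeq_sym, Rfun_Wq, bounded_ltb.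
  rewrite (Rfun_spec _ _ _ K), <- map_filter_filterL. rewrite (filter_ext_in _ (fun x => q (iidx u x))). apply fpeq_refl.
  intros y _. destruct Ksc as [_ Ksc]. specialize (Ksc y).
  destruct (q (iidx u y)); simpl.
  - assert (E : cb (In y sc) = false) by (apply cbF; rewrite Ksc; discriminate). rewrite E; auto.
  - assert (E : cb (In y sc) = true) by (apply cbP; apply Ksc; auto). rewrite E; auto.
Qed.
End Keep.

Definition castG {G : nat -> GrpData} {i j : nat} (e : i = j) (x : car (G i)) : car (G j) :=
  eq_rect i (fun t => car (G t)) x j e.

Lemma cast_sigma {G : nat -> GrpData} i j (e : i = j) (x : car (G i)) :
  existT (fun t => car (G t)) j (castG e x) = existT _ i x.
Proof. destruct e. reflexivity. Qed.

Section Single.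
Context {G H : nat -> GrpData} (HH : forall n, is_group (H n)).
Context (g : nat -> nat) (c : forall n, car (G n) -> car (H (g n))).
Context (c_geq : forall n x y, geq (G n) x y -> geq (H (g n)) (c n x) (c n y))
  (c_mul : forall n x y, geq (H (g n)) (c n (gmul (G n) x y)) (gmul (H (g n)) (c n x) (c n y)))
  (c_one : forall n, geq (H (g n)) (c n (gone (G n))) (gone (H (g n)))).
Definition se (a : fletter nat G) : list (fletter nat H) :=
  [existT (fun m => car (H m)) (g (projT1 a)) (c _ (projT2 a))].
Lemma se_h1 i x y : geq (G i) x y -> fpeq (se (existT _ i x)) (se (existT _ i y)).
Proof. intros K. apply fpeq_st, fps_eq, c_geq, K. Qed.
Lemma se_h2 i x y : fpeq (se (existT _ i (gmul (G i) x y))) (se (existT _ i x) ++ se (existT _ i y)).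
Proof. eapply fpeq_trans. apply fpeq_st, fps_eq, c_mul. apply fpeq_sym, fpeq_st, fps_mul. Qed.
Lemma se_h3 i : fpeq (se (existT _ i (gone (G i)))) [].
Proof. eapply fpeq_trans. apply fpeq_st, fps_eq, c_one. apply fpeq_st, fps_one. Qed.
End Single.

Section CastHom.
Context {G : nat -> GrpData} (HG : forall n, is_group (G n)).
Lemma cast_geq i j (e : i = j) x y : geq (G i) x y -> geq (G j) (castG e x) (castG e y).
Proof. destruct e. auto. Qed.
Lemma cast_mul i j (e : i = j) x y : geq (G j) (castG e (gmul (G i) x y)) (gmul (G j) (castG e x) (castG e y)).
Proof. destruct e. apply (geq_refl _ (HG i)). Qed.
Lemma cast_one i j (e : i = j) : geq (G j) (castG e (gone (G i))) (gone (G j)).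
Proof. destruct e. apply (geq_refl _ (HG i)). Qed.
End CastHom.

Section Perm.
Context (G : nat -> GrpData) (HG : forall n, is_group (G n)) (f : nat -> nat)
  (finj : forall x y, f x = f y -> x = y) (fsurj : forall y, exists x, f x = y).

Definition finv n := proj1_sig (constructive_indefinite_description _ (fsurj n)).
Lemma f_finv n : f (finv n) = n.
Proof. unfold finv. destruct constructive_indefinite_description; auto. Qed.
Lemma finv_f m : finv (f m) = m.
Proof. apply finj, f_finv. Qed.

Definition Gf := fun n => G (f n).
Definition pe1 : fletter nat G -> list (fletter nat Gf) :=
  @se G Gf finv (fun n x => castG (G := G) (eq_sym (f_finv n)) x).
Lemma pe1_src a b : In b (pe1 a) -> In (projT1 a) ((fun m => [f m]) (projT1 b)).
Proof. intros [<-|[]]. simpl. rewrite f_finv. auto. Qed.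
Definition pe2 : fletter nat Gf -> list (fletter nat G) := @se Gf G f (fun n x => x).
Lemma pe2_src a b : In b (pe2 a) -> In (projT1 a) ((fun m => [finv m]) (projT1 b)).
Proof. intros [<-|[]]. simpl. rewrite finv_f. auto. Qed.

Lemma HGf n : is_group (Gf n). Proof. apply HG. Qed.

Lemma castf m j (h : j = m) (e : f m = f j) (y : car (G (f m))) :
  existT (fun k => car (G (f k))) j (castG (G := G) e y) = existT _ m y.
Proof. subst j. replace e with (eq_refl (f m)) by apply proof_irrelevance. reflexivity. Qed.

Lemma part1 : arch_isomorphic G Gf.
Proof.
  set (phi := Wf pe1 (fun m => [f m]) pe1_src).
  set (psi := Wf pe2 (fun m => [finv m]) pe2_src).
  assert (W1 : WM phi).
  { apply Wf_WM; intros; unfold pe1.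
    - apply se_h1; auto. intros; apply (cast_geq (G := G)); auto.
    - apply se_h2. intros; apply (cast_mul (G := G)); auto.
    - apply se_h3. intros; apply (cast_one (G := G)); auto. }
  assert (W2 : WM psi).
  { apply Wf_WM; intros; unfold pe2.
    - apply se_h1; auto.
    - apply se_h2. intros; apply (geq_refl _ (HG _)).
    - apply se_h3. intros; apply (geq_refl _ (HG _)). }
  apply (iso_of HG HGf phi psi W1 W2).
  - intros x. apply aeq_of_tpeq; auto. eapply tpeq_trans. 2: apply Wq_true.
    apply Wf_comp.
    + intros; apply se_h1; auto.
    + intros; apply se_h2. intros; apply (geq_refl _ (HG _)).
    + intros; apply se_h3. intros; apply (geq_refl _ (HG _)).
    + intros [n x']. unfold pe1, pe2, se, eq_. simpl. rewrite cast_sigma. apply fpeq_refl.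
  - intros z. apply aeq_of_tpeq; auto. apply HGf. eapply tpeq_trans. 2: apply Wq_true.
    apply Wf_comp.
    + intros; apply se_h1; auto. intros; apply (cast_geq (G := G)); auto.
    + intros; apply se_h2. intros; apply (cast_mul (G := G)); auto.
    + intros; apply se_h3. intros; apply (cast_one (G := G)); auto.
    + intros [m y]. unfold pe1, pe2, se, eq_. simpl. rewrite castf. apply fpeq_refl. apply finv_f.
Qed.
End Perm.

Lemma letter_eq {F : nat -> GrpData} j (a b : car (F j)) :
  geq (F j) a b -> fpeq [existT (fun n => car (F n)) j a] [existT _ j b].
Proof. intros K. apply fpeq_st, fps_eq, K. Qed.
Lemma letter_mul {F : nat -> GrpData} j (a b c : car (F j)) :
  geq (F j) a (gmul (F j) b c) -> fpeq [existT (fun n => car (F n)) j a] ([existT _ j b] ++ [existT _ j c]).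
Proof. intros K. eapply fpeq_trans. apply fpeq_st, fps_eq, K. apply fpeq_sym, fpeq_st, fps_mul. Qed.
Lemma letter_one {F : nat -> GrpData} j (a : car (F j)) :
  geq (F j) a (gone (F j)) -> fpeq [existT (fun n => car (F n)) j a] [].
Proof. intros K. eapply fpeq_trans. apply fpeq_st, fps_eq, K. apply fpeq_st, fps_one. Qed.

Section Shift.
Context (G : nat -> GrpData) (HG : forall n, is_group (G n)) (k : nat).
Local Notation Gk := (fun n => G (n + k)).
Lemma HGk n : is_group (G (n + k)). Proof. apply HG. Qed.

Definition she1 (a : fletter nat G) : list (fletter nat Gk) :=
  match le_dec k (projT1 a) with
  | left h => [existT (fun m => car (Gk m)) (projT1 a - k)
                 (castG (G := G) (eq_sym (Nat.sub_add k (projT1 a) h)) (projT2 a))]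
  | right _ => [] end.
Lemma she1_src a b : In b (she1 a) -> In (projT1 a) ((fun m => [m + k]) (projT1 b)).
Proof. unfold she1. destruct le_dec as [h|h]; [intros [<-|[]]|intros []]. simpl. left. lia. Qed.
Definition she2 : fletter nat Gk -> list (fletter nat G) := @se Gk G (fun m => m + k) (fun n x => x).
Lemma she2_src a b : In b (she2 a) -> In (projT1 a) ((fun n => if k <=? n then [n - k] else []) (projT1 b)).
Proof.
  intros [<-|[]]. simpl. destruct (Nat.leb_spec k (projT1 a + k)); [|lia]. left. lia.
Qed.

Lemma castk m j (h : j = m) (e : m + k = j + k) (y : car (G (m + k))) :
  existT (fun t => car (Gk t)) j (castG (G := G) e y) = existT _ m y.
Proof. subst j. replace e with (eq_refl (m + k)) by apply proof_irrelevance. reflexivity. Qed.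

Lemma part2 : arch_isomorphic G Gk.
Proof.
  set (phi := Wf she1 (fun m => [m + k]) she1_src).
  set (psi := Wf she2 _ she2_src).
  assert (W1 : WM phi).
  { apply Wf_WM; intros; unfold she1; simpl; destruct le_dec as [h|h]; try apply fpeq_refl.
    - apply (letter_eq (F := fun n => G (n + k))). apply (cast_geq (G := G)); auto.
    - apply (letter_mul (F := fun n => G (n + k))). apply (cast_mul (G := G)); auto.
    - apply (letter_one (F := fun n => G (n + k))). apply (cast_one (G := G)); auto. }
  assert (W2 : WM psi).
  { apply Wf_WM; intros; unfold she2.
    - apply (se_h1 (G := fun n => G (n + k)) (H := G)); auto.
    - apply (se_h2 (G := fun n => G (n + k)) (H := G)). intros; apply (geq_refl _ (HG _)).
    - apply (se_h3 (G := fun n => G (n + k)) (H := G)). intros; apply (geq_refl _ (HG _)). }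
  apply (iso_of HG HGk phi psi W1 W2).
  - intros x. eapply aeq_trans; auto. 2: apply (drop_aeq HG x (fun n => k <=? n)).
    2:{ exists k. intros n Hn. destruct (Nat.leb_spec k n); simpl in Hn; [discriminate|lia]. }
    apply aeq_of_tpeq; auto.
    apply Wf_comp.
    + intros; apply (se_h1 (G := fun n => G (n + k)) (H := G)); auto.
    + intros; apply (se_h2 (G := fun n => G (n + k)) (H := G)). intros; apply (geq_refl _ (HG _)).
    + intros; apply (se_h3 (G := fun n => G (n + k)) (H := G)). intros; apply (geq_refl _ (HG _)).
    + intros [n x']. unfold she1, she2, se, eq_. simpl.
      destruct le_dec as [h|h]; destruct (Nat.leb_spec k n); try lia; simpl; [|apply fpeq_refl].
      rewrite cast_sigma. apply fpeq_refl.
  - intros z. apply (aeq_of_tpeq HGk). eapply tpeq_trans. 2: apply Wq_true.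
    apply Wf_comp.
    + intros; unfold she1; simpl; destruct le_dec as [h|h]; try apply fpeq_refl.
      apply (letter_eq (F := fun n => G (n + k))). apply (cast_geq (G := G)); auto.
    + intros; unfold she1; simpl; destruct le_dec as [h|h]; try apply fpeq_refl.
      apply (letter_mul (F := fun n => G (n + k))). apply (cast_mul (G := G)); auto.
    + intros; unfold she1; simpl; destruct le_dec as [h|h]; try apply fpeq_refl.
      apply (letter_one (F := fun n => G (n + k))). apply (cast_one (G := G)); auto.
    + intros [m y]. unfold she1, she2, se, eq_. simpl. destruct le_dec as [h|h]; [|lia].
      simpl. rewrite castk. apply fpeq_refl. lia.
Qed.
End Shift.

Section Pair.
Context (G : nat -> GrpData) (HG : forall n, is_group (G n)).
Definition H3 := fun n => FreeProd bool (fam2 (G (2 * n)) (G (2 * n + 1))).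
Lemma HG3 n : is_group (H3 n).
Proof. apply isg_FreeProd. intros [|]; apply HG. Qed.

Lemma odd_eq n : n <> 2 * (n / 2) -> n = 2 * (n / 2) + 1.
Proof. intros K. pose proof (Nat.div_mod_eq n 2). pose proof (Nat.mod_upper_bound n 2). lia. Qed.

Definition FL n := fletter bool (fam2 (G (2 * n)) (G (2 * n + 1))).

Definition g3 n (x : car (G n)) : FL (n / 2) :=
  match Nat.eq_dec n (2 * (n / 2)) with
  | left e => existT (fun b => car (fam2 (G (2 * (n / 2))) (G (2 * (n / 2) + 1)) b)) true (castG (G := G) e x)
  | right ne => existT (fun b => car (fam2 (G (2 * (n / 2))) (G (2 * (n / 2) + 1)) b)) false
                  (castG (G := G) (odd_eq n ne) x)
  end.

Definition pr1 (a : fletter nat G) : list (fletter nat H3) :=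
  [existT (fun m => car (H3 m)) (projT1 a / 2) [g3 (projT1 a) (projT2 a)]].
Lemma pr1_src a b : In b (pr1 a) -> In (projT1 a) ((fun m => [2 * m; 2 * m + 1]) (projT1 b)).
Proof.
  intros [<-|[]]. destruct a as [n x]. change (In n [2 * (n / 2); 2 * (n / 2) + 1]).
  pose proof (Nat.div_mod_eq n 2). pose proof (Nat.mod_upper_bound n 2).
  destruct (Nat.eq_dec n (2 * (n / 2))); [left|right; left]; lia.
Qed.

Definition k3 m (a : FL m) : fletter nat G :=
  match a with existT _ b y =>
    (if b return car (fam2 (G (2 * m)) (G (2 * m + 1)) b) -> fletter nat G
     then fun y => existT (fun n => car (G n)) (2 * m) y
     else fun y => existT (fun n => car (G n)) (2 * m + 1) y) y end.

Definition pr2 (a : fletter nat H3) : list (fletter nat G) := map (k3 (projT1 a)) (projT2 a).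
Lemma pr2_src a b : In b (pr2 a) -> In (projT1 a) ((fun n => [n / 2]) (projT1 b)).
Proof.
  destruct a as [m w]. unfold pr2. cbn [projT1 projT2]. intros K.
  apply in_map_iff in K as [[[|] y] [<- _]]; cbn [k3 projT1 In]; left.
  - rewrite Nat.mul_comm, Nat.div_mul; auto.
  - replace (2 * m + 1) with (1 + m * 2) by lia. rewrite Nat.div_add; auto.
Qed.

Lemma g3_geq n x y : geq (G n) x y -> fpeq [g3 n x] [g3 n y].
Proof. intros K. unfold g3. destruct Nat.eq_dec; apply fpeq_st, fps_eq; cbn [fam2]; apply (cast_geq (G := G)); auto. Qed.
Lemma g3_mul n x y : fpeq [g3 n (gmul (G n) x y)] [g3 n x; g3 n y].
Proof.
  unfold g3. destruct Nat.eq_dec; (eapply fpeq_trans; [apply fpeq_st, fps_eq; cbn [fam2]; apply (cast_mul (G := G)); auto|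
    apply fpeq_sym, fpeq_st, fps_mul]).
Qed.
Lemma g3_one n : fpeq [g3 n (gone (G n))] [].
Proof.
  unfold g3. destruct Nat.eq_dec; (eapply fpeq_trans; [apply fpeq_st, fps_eq; cbn [fam2]; apply (cast_one (G := G)); auto|
    apply fpeq_st, fps_one]).
Qed.

Lemma pr1_h1 i x y : geq (G i) x y -> fpeq (pr1 (existT _ i x)) (pr1 (existT _ i y)).
Proof. intros K. apply fpeq_st, fps_eq. simpl. apply g3_geq, K. Qed.
Lemma pr1_h2 i x y : fpeq (pr1 (existT _ i (gmul (G i) x y))) (pr1 (existT _ i x) ++ pr1 (existT _ i y)).
Proof. eapply fpeq_trans. apply fpeq_st, fps_eq. simpl. apply g3_mul. apply fpeq_sym, fpeq_st, fps_mul. Qed.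
Lemma pr1_h3 i : fpeq (pr1 (existT _ i (gone (G i)))) [].
Proof. eapply fpeq_trans. apply fpeq_st, fps_eq. simpl. apply g3_one. apply fpeq_st, (fps_one _ H3). Qed.

Lemma k3_fpeq m (w w' : list (FL m)) : fpeq w w' -> fpeq (map (k3 m) w) (map (k3 m) w').
Proof.
  intros K. rewrite <- !flat_map_single. apply fpeq_hom; auto.
  - intros [|] x y E; apply fpeq_st, fps_eq; exact E.
  - intros [|] x y; apply fpeq_sym, fpeq_st, fps_mul.
  - intros [|]; apply fpeq_st, fps_one.
Qed.

Lemma pr2_h1 i x y : geq (H3 i) x y -> fpeq (pr2 (existT _ i x)) (pr2 (existT _ i y)).
Proof. apply k3_fpeq. Qed.
Lemma pr2_h2 i x y : fpeq (pr2 (existT _ i (gmul (H3 i) x y))) (pr2 (existT _ i x) ++ pr2 (existT _ i y)).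
Proof. unfold pr2. simpl. rewrite map_app. apply fpeq_refl. Qed.
Lemma pr2_h3 i : fpeq (pr2 (existT _ i (gone (H3 i)))) [].
Proof. apply fpeq_refl. Qed.

Lemma eqT m j (h : j = m) (e : 2 * m = 2 * j) (y : car (G (2 * m))) :
  existT (fun j => car (H3 j)) j
    [existT (fun b => car (fam2 (G (2 * j)) (G (2 * j + 1)) b)) true (castG (G := G) e y)]
  = existT (fun j => car (H3 j)) m [existT (fun b => car (fam2 (G (2 * m)) (G (2 * m + 1)) b)) true y].
Proof. subst j. replace e with (eq_refl (2 * m)) by apply proof_irrelevance. reflexivity. Qed.
Lemma eqF m j (h : j = m) (e : 2 * m + 1 = 2 * j + 1) (y : car (G (2 * m + 1))) :
  existT (fun j => car (H3 j)) j
    [existT (fun b => car (fam2 (G (2 * j)) (G (2 * j + 1)) b)) false (castG (G := G) e y)]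
  = existT (fun j => car (H3 j)) m [existT (fun b => car (fam2 (G (2 * m)) (G (2 * m + 1)) b)) false y].
Proof. subst j. replace e with (eq_refl (2 * m + 1)) by apply proof_irrelevance. reflexivity. Qed.

Lemma pr12 m (a : FL m) : pr1 (k3 m a) = [existT (fun j => car (H3 j)) m [a]].
Proof.
  destruct a as [[|] y]; unfold pr1, k3; cbn [projT1 projT2]; unfold g3.
  - destruct Nat.eq_dec as [e|ne].
    + f_equal. apply eqT. rewrite Nat.mul_comm, Nat.div_mul; auto.
    + exfalso. rewrite Nat.mul_comm, Nat.div_mul in ne; auto. lia.
  - destruct Nat.eq_dec as [e|ne].
    + exfalso. replace (2 * m + 1) with (1 + m * 2) in e by lia. rewrite Nat.div_add in e; auto. simpl in e. lia.
    + f_equal. apply eqF. replace (2 * m + 1) with (1 + m * 2) by lia. rewrite Nat.div_add; auto.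
Qed.

Lemma part3 : arch_isomorphic G H3.
Proof.
  set (phi := Wf pr1 _ pr1_src).
  set (psi := Wf pr2 _ pr2_src).
  assert (W1 : WM phi) by (apply Wf_WM; [apply pr1_h1|apply pr1_h2|apply pr1_h3]).
  assert (W2 : WM psi) by (apply Wf_WM; [apply pr2_h1|apply pr2_h2|apply pr2_h3]).
  apply (iso_of HG HG3 phi psi W1 W2).
  - intros x. apply aeq_of_tpeq; auto. eapply tpeq_trans. 2: apply Wq_true.
    apply Wf_comp. apply pr2_h1. apply pr2_h2. apply pr2_h3.
    intros [n x']. unfold pr1, pr2, eq_. simpl. unfold g3. destruct Nat.eq_dec; simpl; rewrite cast_sigma; apply fpeq_refl.
  - intros z. apply aeq_of_tpeq; auto. apply HG3. eapply tpeq_trans. 2: apply Wq_true.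
    apply Wf_comp. apply pr1_h1. apply pr1_h2. apply pr1_h3.
    intros [m w]. unfold pr2, eq_. cbn [projT1 projT2]. rewrite flat_map_map.
    rewrite (flat_map_ext_in _ (fun a => [existT (fun j => car (H3 j)) m [a]])) by (intros; apply pr12).
    induction w as [|a w IH]; cbn [flat_map app].
    + apply fpeq_sym, fpeq_st, (fps_one _ H3).
    + eapply fpeq_trans. apply (fpeq_app [_] [_] _ _ (fpeq_refl _ _ _) IH).
      apply fpeq_st, (fps_mul _ H3 m [a] w).
Qed.
End Pair.

Theorem lemma17 (G : nat -> GrpData) (HG : forall n, is_group (G n)) :
  (forall f : nat -> nat,
      (forall x y, f x = f y -> x = y) -> (forall y, exists x, f x = y) ->
      arch_isomorphic G (fun n => G (f n))) /\
  (forall k : nat, arch_isomorphic G (fun n => G (n + k))) /\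
  arch_isomorphic G (fun n => FreeProd bool (fam2 (G (2 * n)) (G (2 * n + 1)))).
Proof.
  split; [|split].
  - intros f finj fsurj. apply (part1 G HG f finj fsurj).
  - intros k. apply (part2 G HG k).
  - apply (part3 G HG).
Qed.
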